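(* For every $\alpha \in (0,\tfrac{1}{2})$ there is a (deterministic, non-clairvoyant) online algorithm for dynamic bin packing that makes at most $\frac{4\alpha}{1-2\alpha}\cdot n$ migrations in total on every instance with $n$ items, and such that at every time $t$ the number of bins it has open is at most $\frac{1}{\alpha}\mathrm{OPT}_t + O(\log \rho)$, where $\rho$ is the maximum number of items simultaneously present in the system at any time (the $O(\cdot)$ hides an absolute constant).
   Context: Dynamic bin packing: bins have capacity $1$. Items $i=1,\dots,n$ arrive online at arrival times $a_i\ge 0$, with size $s_i\in[0,1]$ and duration $d_i>0$; item $i$ is present in the system during $[a_i,a_i+d_i)$. The algorithm is non-clairvoyant: at arrival only $s_i$ is revealed, not $d_i$. Upon arrival the algorithm must place the item into an open bin whose current load (total size of the items it contains) plus $s_i$ is at most $1$, or open a new bin for it. A migration moves an already placed item from its bin to another bin (respecting capacity); the number of migrations is the total number of such moves. A bin is open while it contains at least one item. $\mathrm{OPT}_t$ denotes the minimum number of unit-capacity bins needed to pack the items present in the system at time $t$. *)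

(* Defs.v *)
From Stdlib Require Import Reals List Permutation Sorting.Sorted Arith.
Import ListNotations.
Open Scope R_scope.

(* An item: arrival time, size, duration. Present during [arr, arr+dur). *)
Record item := mkItem { arr : R; size : R; dur : R }.

Definition valid_item (it : item) : Prop :=
  0 <= arr it /\ 0 <= size it <= 1 /\ 0 < dur it.

Definition instance := list item.
Definition itm (I : instance) (i : nat) : item := nth i I (mkItem 0 0 1).

Definition present_b (I : instance) (t : R) (i : nat) : bool :=
  if Rle_dec (arr (itm I i)) t then
    if Rlt_dec t (arr (itm I i) + dur (itm I i)) then true else false
  else false.

Definition present_items (I : instance) (t : R) : list nat :=
  filter (present_b I t) (seq 0 (length I)).

Definition n_present (I : instance) (t : R) : nat := length (present_items I t).

Definition is_rho (I : instance) (r : nat) : Prop :=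
  (exists t, n_present I t = r) /\ (forall t, (n_present I t <= r)%nat).

Definition packable (I : instance) (t : R) (m : nat) : Prop :=
  exists f : nat -> nat,
    (forall i, In i (present_items I t) -> (f i < m)%nat) /\
    (forall b, (b < m)%nat ->
       fold_right Rplus 0
         (map (fun i => size (itm I i))
              (filter (fun i => Nat.eqb (f i) b) (present_items I t))) <= 1).

Definition is_opt (I : instance) (t : R) (m : nat) : Prop :=
  packable I t m /\ (forall m', packable I t m' -> (m <= m')%nat).

Inductive event := Arr (i : nat) | Dep (i : nat).

Definition ev_time (I : instance) (e : event) : R :=
  match e with
  | Arr i => arr (itm I i)
  | Dep i => arr (itm I i) + dur (itm I i)
  end.

Definition is_dep (e : event) : bool :=
  match e with Dep _ => true | Arr _ => false end.

(* e1 may be processed before e2: earlier time, or same time and not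
   (arrival before departure) -- departures at time t happen before
   arrivals at time t, since items are present on [a, a+d). *)
Definition ev_le (I : instance) (e1 e2 : event) : Prop :=
  ev_time I e1 < ev_time I e2 \/
  (ev_time I e1 = ev_time I e2 /\ (is_dep e1 = true \/ is_dep e2 = false)).

Definition all_events (I : instance) : list event :=
  map Arr (seq 0 (length I)) ++ map Dep (seq 0 (length I)).

(* a valid online presentation of the instance: every event exactly once,
   in chronological order (ties among simultaneous events of the same kind
   in arbitrary order) *)
Definition valid_order (I : instance) (es : list event) : Prop :=
  Permutation es (all_events I) /\ StronglySorted (ev_le I) es.

(* What the algorithm observes: an arrival reveals only the item's label and
   size (never its duration); a departure reveals which item left. *)
Inductive observation := OArr (i : nat) (s : R) | ODep (i : nat).

Definition obs_of (I : instance) (e : event) : observation :=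
  match e with
  | Arr i => OArr i (size (itm I i))
  | Dep i => ODep i
  end.

(* Response to an event: the bin (label) into which an arriving item is put
   (ignored on departures; a label of an empty bin = opening a new bin), then
   a sequence of migrations (item, target bin), performed in order. *)
Record action := mkAction { place : nat; moves : list (nat * nat) }.

(* A deterministic online algorithm: a function of the history of observations
   (oldest first, including the current event). *)
Definition algorithm := list observation -> action.

(* A configuration: which bin each item is in (None = not in the system). *)
Definition config := nat -> option nat.

Definition load (I : instance) (c : config) (b : nat) : R :=
  fold_right Rplus 0
    (map (fun i => match c i with
                   | Some b' => if Nat.eq_dec b' b then size (itm I i) else 0
                   | None => 0
                   end) (seq 0 (length I))).

Definition upd (c : config) (i : nat) (v : option nat) : config :=
  fun j => if Nat.eq_dec j i then v else c j.

Definition apply_move (I : instance) (c : config) (m : nat * nat) : option config :=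
  let (j, b) := m in
  match c j with
  | None => None
  | Some _ => if Rle_dec (load I c b + size (itm I j)) 1
              then Some (upd c j (Some b)) else None
  end.

Definition apply_moves (I : instance) (c : config) (ms : list (nat * nat))
  : option config :=
  fold_left (fun oc m => match oc with None => None | Some c' => apply_move I c' m end)
            ms (Some c).

(* process one event given the history before it; None = infeasible action *)
Definition process (I : instance) (A : algorithm) (hist : list observation)
  (c : config) (e : event) : option config :=
  let act := A (hist ++ [obs_of I e]) in
  match e with
  | Arr i =>
      if Rle_dec (load I c (place act) + size (itm I i)) 1
      then apply_moves I (upd c i (Some (place act))) (moves act)
      else None
  | Dep i => apply_moves I (upd c i None) (moves act)
  end.

Fixpoint run_aux (I : instance) (A : algorithm) (hist : list observation)
  (c : config) (es : list event) : option config :=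
  match es with
  | [] => Some c
  | e :: es' =>
      match process I A hist c e with
      | None => None
      | Some c' => run_aux I A (hist ++ [obs_of I e]) c' es'
      end
  end.

Definition run (I : instance) (A : algorithm) (es : list event) : option config :=
  run_aux I A [] (fun _ => None) es.

Definition migrations (I : instance) (A : algorithm) (es : list event) : nat :=
  fold_right Nat.add 0%nat
    (map (fun k => length (moves (A (map (obs_of I) (firstn (S k) es)))))
         (seq 0 (length es))).

Definition n_events_upto (I : instance) (es : list event) (t : R) : nat :=
  length (filter (fun e => if Rle_dec (ev_time I e) t then true else false) es).

Definition open_bins (I : instance) (c : config) : nat :=
  length (nodup Nat.eq_dec
    (flat_map (fun i => match c i with Some b => [b] | None => [] end)
              (seq 0 (length I)))).

(* Main.v *)
Require Import Defs.
From Stdlib Require Import Reals List Permutation Sorting.Sorted Arith Lia Lra Bool ZArith.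
Import ListNotations.
Open Scope R_scope.

Definition sumR (l : list nat) (f : nat -> R) : R :=
  fold_right (fun i a => f i + a) 0 l.

Lemma sumR_nil f : sumR [] f = 0. Proof. reflexivity. Qed.
Lemma sumR_cons a l f : sumR (a :: l) f = f a + sumR l f. Proof. reflexivity. Qed.
Lemma sumR_app l1 l2 f : sumR (l1 ++ l2) f = sumR l1 f + sumR l2 f.
Proof. induction l1; simpl; [lra|]. unfold sumR in *; simpl. rewrite IHl1. lra. Qed.

Lemma sumR_map l f : fold_right Rplus 0 (map f l) = sumR l f.
Proof. induction l; simpl; auto. rewrite IHl. reflexivity. Qed.

Lemma sumR_le l f g : (forall i, In i l -> f i <= g i) -> sumR l f <= sumR l g.
Proof. induction l; simpl; intros H. lra. unfold sumR in *; simpl.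
  assert (f a <= g a) by (apply H; auto). assert (fold_right (fun i a => f i + a) 0 l <= fold_right (fun i a => g i + a) 0 l) by (apply IHl; auto). lra. Qed.

Lemma sumR_ext l f g : (forall i, In i l -> f i = g i) -> sumR l f = sumR l g.
Proof. intros H. apply Rle_antisym; apply sumR_le; intros i Hi; rewrite H; auto; lra. Qed.

Lemma sumR_nonneg l f : (forall i, In i l -> 0 <= f i) -> 0 <= sumR l f.
Proof. intros H. replace 0 with (sumR l (fun _ => 0)). apply sumR_le; auto.
  induction l; simpl; auto. unfold sumR in *; simpl. rewrite IHl. lra. intros; apply H; simpl; auto. Qed.

Lemma sumR_plus l f g : sumR l (fun i => f i + g i) = sumR l f + sumR l g.
Proof. induction l; simpl; unfold sumR in *; simpl; [lra|]. rewrite IHl. lra. Qed.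

Lemma sumR_scale l f c : sumR l (fun i => c * f i) = c * sumR l f.
Proof. induction l; simpl; unfold sumR in *; simpl; [lra|]. rewrite IHl. lra. Qed.

Lemma sumR_const0 l : sumR l (fun _ => 0) = 0.
Proof. induction l; simpl; unfold sumR in *; simpl; [lra|]. rewrite IHl. lra. Qed.

Lemma sumR_filter (p : nat -> bool) l f :
  sumR (filter p l) f = sumR l (fun i => if p i then f i else 0).
Proof. induction l; cbn [filter]; auto. rewrite sumR_cons. destruct (p a); rewrite ?sumR_cons, IHl; lra. Qed.

Lemma INR_length_filter (p : nat -> bool) l :
  INR (length (filter p l)) = sumR l (fun i => if p i then 1 else 0).
Proof. induction l; cbn [filter]; auto. rewrite sumR_cons. destruct (p a); cbn [length]; rewrite ?S_INR, IHl; lra. Qed.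

Lemma sumR_indicator l x c : NoDup l ->
  sumR l (fun b => if Nat.eqb x b then c else 0) = if in_dec Nat.eq_dec x l then c else 0.
Proof.
  induction 1. reflexivity. rewrite sumR_cons, IHNoDup.
  destruct (Nat.eqb_spec x x0).
  - subst. destruct (in_dec Nat.eq_dec x0 l); [contradiction|].
    destruct (in_dec Nat.eq_dec x0 (x0 :: l)). lra. exfalso; apply n0; simpl; auto.
  - destruct (in_dec Nat.eq_dec x l); destruct (in_dec Nat.eq_dec x (x0 :: l)); simpl in *; try lra.
    exfalso; auto. exfalso; destruct i; auto.
Qed.

Lemma sumR_exchange l1 l2 (h : nat -> nat -> R) :
  sumR l1 (fun b => sumR l2 (h b)) = sumR l2 (fun i => sumR l1 (fun b => h b i)).
Proof.
  induction l1. rewrite sumR_nil. symmetry. apply sumR_const0.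
  rewrite sumR_cons, IHl1. rewrite <- sumR_plus. apply sumR_ext. intros. rewrite sumR_cons. reflexivity.
Qed.

Lemma sumR_partition l (g : nat -> nat) m f :
  (forall i, In i l -> (g i < m)%nat) ->
  sumR l f = sumR (seq 0 m) (fun b => sumR (filter (fun i => Nat.eqb (g i) b) l) f).
Proof.
  intros H.
  transitivity (sumR (seq 0 m) (fun b => sumR l (fun i => if Nat.eqb (g i) b then f i else 0))).
  2:{ apply sumR_ext; intros. rewrite sumR_filter. reflexivity. }
  rewrite sumR_exchange. apply sumR_ext. intros i Hi.
  transitivity (sumR (seq 0 m) (fun b => if Nat.eqb (g i) b then f i else 0)).
  rewrite sumR_indicator by apply seq_NoDup.
  destruct (in_dec Nat.eq_dec (g i) (seq 0 m)); auto. exfalso; apply n; apply in_seq. specialize (H i Hi). lia.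
  reflexivity.
Qed.

Lemma sumR_remove_le0 a l f : (forall i, In i l -> 0 <= f i) ->
  sumR (remove Nat.eq_dec a l) f <= sumR l f.
Proof.
  induction l as [|x l IH]; intros Hf. apply Rle_refl.
  cbn [remove]. assert (0 <= f x) by (apply Hf; left; auto).
  assert (sumR (remove Nat.eq_dec a l) f <= sumR l f) by (apply IH; intros; apply Hf; right; auto).
  destruct (Nat.eq_dec a x); rewrite ?sumR_cons; lra.
Qed.

Lemma sumR_remove_le a l f : In a l -> (forall i, In i l -> 0 <= f i) ->
  f a + sumR (remove Nat.eq_dec a l) f <= sumR l f.
Proof.
  induction l as [|x l IH]; intros Ha Hf. contradiction.
  cbn [remove]. rewrite sumR_cons. destruct (Nat.eq_dec a x).
  - subst. pose proof (sumR_remove_le0 x l f (fun i H => Hf i (or_intror H))). lra.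
  - destruct Ha as [Ha|Ha]; [congruence|]. rewrite sumR_cons.
    assert (f a + sumR (remove Nat.eq_dec a l) f <= sumR l f) by (apply IH; auto; intros; apply Hf; right; auto). lra.
Qed.

Lemma sumR_incl_le l l' f : NoDup l -> incl l l' -> (forall i, In i l' -> 0 <= f i) ->
  sumR l f <= sumR l' f.
Proof.
  intros Hnd. revert l'. induction Hnd as [|a l Hna Hnd IH]; intros l' Hinc Hf.
  rewrite sumR_nil. apply sumR_nonneg; auto.
  rewrite sumR_cons.
  assert (Ha : In a l') by (apply Hinc; simpl; auto).
  assert (sumR l f <= sumR (remove Nat.eq_dec a l') f).
  { apply IH. intros x Hx. apply in_in_remove. intro; subst; contradiction. apply Hinc; simpl; auto.
    intros i Hi. apply Hf. apply in_remove in Hi. tauto. }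
  pose proof (sumR_remove_le a l' f Ha Hf). lra.
Qed.

Lemma count_in_le (l m : list nat) : NoDup l ->
  (length (filter (fun i => if in_dec Nat.eq_dec i m then true else false) l) <= length m)%nat.
Proof.
  intros H. apply NoDup_incl_length. apply NoDup_filter; auto.
  intros x Hx. apply filter_In in Hx. destruct Hx as [_ Hx]. destruct (in_dec Nat.eq_dec x m); auto; discriminate.
Qed.

Lemma sumR_bound_count l m (g : nat -> R) a : NoDup l -> 0 <= a ->
  (forall i, In i l -> g i <= if in_dec Nat.eq_dec i m then a else 0) ->
  sumR l g <= a * INR (length m).
Proof.
  intros Hnd Ha Hg.
  apply Rle_trans with (sumR l (fun i => a * (if (if in_dec Nat.eq_dec i m then true else false) then 1 else 0))).
  apply sumR_le. intros i Hi. specialize (Hg i Hi). destruct (in_dec Nat.eq_dec i m); lra.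
  rewrite sumR_scale, <- INR_length_filter. apply Rmult_le_compat_l; auto. apply le_INR. apply count_in_le; auto.
Qed.

Lemma perm_filter_length {A} (p : A -> bool) l l' : Permutation l l' ->
  length (filter p l) = length (filter p l').
Proof. induction 1; simpl; auto. destruct (p x); simpl; auto. destruct (p x), (p y); simpl; auto. lia. Qed.

Record st := mkSt { dom : list nat; cfg : nat -> nat; cls : nat -> nat; bk : nat -> nat;
  sld : nat -> bool; cr : nat -> nat; cur : nat -> option nat; FF : nat }.

Definition updf {A} (f : nat -> A) (x : nat) (v : A) : nat -> A :=
  fun y => if Nat.eq_dec y x then v else f y.

Lemma updf_eq {A} (f : nat -> A) x v : updf f x v x = v.
Proof. unfold updf. destruct (Nat.eq_dec x x); congruence. Qed.
Lemma updf_neq {A} (f : nat -> A) x v y : y <> x -> updf f x v y = f y.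
Proof. unfold updf. destruct (Nat.eq_dec y x); congruence. Qed.

Definition cnt (s : st) (b : nat) : nat := length (filter (fun j => Nat.eqb (cfg s j) b) (dom s)).

Definition capf (g : R) (P : nat) : nat := Z.to_nat (up (ln (INR P / g) / ln 2)).

Fixpoint findc (sz : R) (k fuel : nat) : nat :=
  match fuel with
  | O => k
  | S f => if Rlt_dec (/ INR (2 ^ S k)) sz then k else findc sz (S k) f
  end.
Definition clsf (sz : R) (cap : nat) : nat := findc sz 0 cap.

Definition open_bin (s : st) (k : nat) : st * nat :=
  match cur s k with
  | Some b => (s, b)
  | None => (mkSt (dom s) (cfg s) (cls s) (updf (bk s) (FF s) k) (sld s) (cr s)
                  (updf (cur s) k (Some (FF s))) (S (FF s)), FF s)
  end.

Definition put (s : st) (j b : nat) : st :=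
  mkSt (if in_dec Nat.eq_dec j (dom s) then dom s else j :: dom s)
       (updf (cfg s) j b) (cls s) (bk s) (sld s) (cr s) (cur s) (FF s).

Definition seal_if (s : st) (k b : nat) : st :=
  if Nat.eqb (cnt s b) (2 ^ k) then
    mkSt (dom s) (cfg s) (cls s) (bk s) (updf (sld s) b true) (cr s) (updf (cur s) k None) (FF s)
  else s.

Definition insert (s : st) (j k : nat) : st * nat :=
  let (s1, b) := open_bin s k in (seal_if (put s1 j b) k b, b).

Fixpoint migr (s : st) (l : list nat) (k : nat) : st * list (nat * nat) :=
  match l with
  | [] => (s, [])
  | j :: l' => let (s1, b) := insert s j k in
               let (s2, ms) := migr s1 l' k in (s2, (j, b) :: ms)
  end.

Definition dep (g : R) (s : st) (i : nat) : st * list (nat * nat) :=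
  if in_dec Nat.eq_dec i (dom s) then
    let b := cfg s i in
    let s1 := mkSt (filter (fun j => negb (Nat.eqb j i)) (dom s)) (cfg s) (cls s) (bk s)
                   (sld s) (cr s) (cur s) (FF s) in
    if sld s1 b then
      let s2 := mkSt (dom s1) (cfg s1) (cls s1) (bk s1) (sld s1)
                     (updf (cr s1) b (S (cr s1 b))) (cur s1) (FF s1) in
      if Rlt_dec (INR (cnt s2 b)) (g * INR (2 ^ bk s2 b)) then
        let s3 := mkSt (dom s2) (cfg s2) (cls s2) (bk s2) (updf (sld s2) b false)
                       (updf (cr s2) b O) (cur s2) (FF s2) in
        migr s3 (filter (fun j => Nat.eqb (cfg s3 j) b) (dom s3)) (bk s3 b)
      else (s2, [])
    else (s1, [])
  else (s, []).

Definition arrv (g : R) (s : st) (i : nat) (sz : R) : st * nat :=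
  let k := clsf sz (capf g (S (length (dom s)))) in
  insert (mkSt (dom s) (cfg s) (updf (cls s) i k) (bk s) (sld s) (cr s) (cur s) (FF s)) i k.

Definition step (g : R) (s : st) (o : observation) : st * action :=
  match o with
  | OArr i sz => let (s', b) := arrv g s i sz in (s', mkAction b [])
  | ODep i => let (s', ms) := dep g s i in (s', mkAction O ms)
  end.

Definition init : st := mkSt [] (fun _ => O) (fun _ => O) (fun _ => O) (fun _ => false)
  (fun _ => O) (fun _ => None) O.

Definition stOf (g : R) (h : list observation) : st :=
  fold_left (fun s o => fst (step g s o)) h init.

Definition Alg (g : R) : algorithm :=
  fun h => snd (step g (stOf g (removelast h)) (last h (ODep O))).

Lemma Alg_snoc g h o : Alg g (h ++ [o]) = snd (step g (stOf g h) o).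
Proof. unfold Alg. rewrite removelast_last, last_last. reflexivity. Qed.

Lemma stOf_snoc g h o : stOf g (h ++ [o]) = fst (step g (stOf g h) o).
Proof. unfold stOf. rewrite fold_left_app. reflexivity. Qed.

Definition Phi (s : st) : R := sumR (seq 0 (FF s)) (fun b => INR (cr s b)).

Definition sizeI (I : instance) (i : nat) : R := size (itm I i).

Definition capped (I : instance) (s : st) (j : nat) : bool :=
  if Rle_dec (sizeI I j) (/ INR (2 ^ S (cls s j))) then true else false.

Definition capcount (I : instance) (s : st) (l : list nat) (k : nat) : nat :=
  length (filter (fun j => andb (Nat.eqb (cls s j) k) (capped I s j)) l).

Definition CoreS (I : instance) (g Bc : R) (s : st) : Prop :=
  NoDup (dom s) /\
  (forall i, In i (dom s) -> (i < length I)%nat /\ (cfg s i < FF s)%nat /\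
      bk s (cfg s i) = cls s i /\ sizeI I i <= / INR (2 ^ cls s i) /\ INR (cls s i) <= Bc) /\
  (forall k b, cur s k = Some b -> (b < FF s)%nat /\ bk s b = k /\ (cnt s b < 2 ^ k)%nat /\ sld s b = false) /\
  (forall b, (FF s <= b)%nat -> cr s b = O /\ sld s b = false) /\
  (forall k, INR (capcount I s (dom s) k) <= g * INR (2 ^ k)).

Definition S6X (s : st) (X : nat) : Prop :=
  forall i, In i (dom s) -> cfg s i <> X ->
    sld s (cfg s i) = true \/ cur s (bk s (cfg s i)) = Some (cfg s i).

Definition S7 (g : R) (s : st) : Prop :=
  forall b, sld s b = true -> g * INR (2 ^ bk s b) <= INR (cnt s b) /\ (2 ^ bk s b <= cnt s b + cr s b)%nat.

Definition Match (s : st) (c : config) : Prop :=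
  (forall i, In i (dom s) -> c i = Some (cfg s i)) /\ (forall i, ~ In i (dom s) -> c i = None).

Lemma pow2_pos k : (0 < 2 ^ k)%nat.
Proof. induction k; simpl; lia. Qed.

Lemma INR_pow2_pos k : 0 < INR (2 ^ k).
Proof. apply lt_0_INR. apply pow2_pos. Qed.

Lemma len_filter_change (p q : nat -> bool) l j : NoDup l -> In j l ->
  (forall i, i <> j -> p i = q i) ->
  (length (filter p l) + (if q j then 1 else 0) = length (filter q l) + (if p j then 1 else 0))%nat.
Proof.
  induction 1 as [|a l Hna Hnd IH]; intros Hj Hpq. contradiction.
  destruct (Nat.eq_dec a j).
  - subst. assert (filter p l = filter q l).
    { apply filter_ext_in. intros i Hi. apply Hpq. intro; subst; contradiction. }
    cbn [filter]. rewrite H. destruct (p j), (q j); simpl; lia.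
  - destruct Hj as [Hj|Hj]; [congruence|]. cbn [filter]. rewrite (Hpq a n).
    specialize (IH Hj Hpq). destruct (q a); simpl; lia.
Qed.

Lemma cnt_zero s b : (forall i, In i (dom s) -> cfg s i <> b) -> cnt s b = O.
Proof.
  intros H. unfold cnt. rewrite (filter_ext_in _ (fun _ => false)). rewrite filter_false. reflexivity.
  intros i Hi. apply Nat.eqb_neq. apply H; auto.
Qed.

Lemma open_bin_spec I g Bc s k s1 b : CoreS I g Bc s -> open_bin s k = (s1, b) ->
  dom s1 = dom s /\ cfg s1 = cfg s /\ cls s1 = cls s /\ sld s1 = sld s /\ cr s1 = cr s /\
  cur s1 k = Some b /\ (forall k', k' <> k -> cur s1 k' = cur s k') /\
  (forall x, (x < FF s)%nat -> bk s1 x = bk s x) /\ bk s1 b = k /\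
  (FF s <= FF s1)%nat /\ (b < FF s1)%nat /\ (cnt s b < 2 ^ k)%nat /\ sld s b = false /\
  (cur s k = Some b \/ (b = FF s /\ cur s k = None)) /\ Phi s1 = Phi s.
Proof.
  intros HC Ho. pose proof HC as [H1 [H2 [H3 [H4 H5]]]].
  unfold open_bin in Ho. destruct (cur s k) as [b0|] eqn:E.
  - injection Ho; intros; subst. destruct (H3 _ _ E) as [? [? [? ?]]].
    repeat split; auto; lia.
  - injection Ho; intros; subst.
    assert (HP : sumR (seq 0 (S (FF s))) (fun b => INR (cr s b)) = sumR (seq 0 (FF s)) (fun b => INR (cr s b))).
    { rewrite seq_S, sumR_app, sumR_cons, sumR_nil, Nat.add_0_l. rewrite (proj1 (H4 (FF s) (le_n _))). simpl INR. lra. }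
    unfold Phi. cbn.
    assert (cnt s (FF s) = O).
    { apply cnt_zero. intros i Hi. specialize (H2 i Hi). lia. }
    repeat split; auto; try apply updf_eq; try (intros; apply updf_neq; auto; lia).
    + rewrite H. apply pow2_pos.
    + apply H4; lia.
Qed.

Lemma cnt_put I g Bc s j b x : CoreS I g Bc s -> (In j (dom s) -> cfg s j <> b) ->
  (x = b -> cnt (put s j b) x = S (cnt s x)) /\
  (x <> b -> (In j (dom s) -> cfg s j <> x) -> cnt (put s j b) x = cnt s x).
Proof.
  intros [Hnd _] Hjb. unfold cnt, put. cbn [dom cfg].
  destruct (in_dec Nat.eq_dec j (dom s)) as [Hin|Hin].
  - pose proof (len_filter_change (fun i => Nat.eqb (cfg s i) x) (fun i => Nat.eqb (updf (cfg s) j b i) x) (dom s) j Hnd Hin) as Hc.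
    cbv beta in Hc. rewrite updf_eq in Hc. split; intros Hx.
    + subst x. rewrite Nat.eqb_refl in Hc. destruct (Nat.eqb_spec (cfg s j) b). exfalso; apply (Hjb Hin); auto.
      assert (forall i, i <> j -> Nat.eqb (cfg s i) b = Nat.eqb (updf (cfg s) j b i) b) by (intros; rewrite updf_neq; auto).
      specialize (Hc H). lia.
    + intros Hjx. specialize (Hjx Hin).
      assert (forall i, i <> j -> Nat.eqb (cfg s i) x = Nat.eqb (updf (cfg s) j b i) x) by (intros; rewrite updf_neq; auto).
      specialize (Hc H). destruct (Nat.eqb_spec b x); [congruence|]. destruct (Nat.eqb_spec (cfg s j) x); [congruence|]. lia.
  - cbn [filter]. rewrite updf_eq.
    rewrite (filter_ext_in (fun i => Nat.eqb (updf (cfg s) j b i) x) (fun i => Nat.eqb (cfg s i) x)).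
    2:{ intros i Hi. rewrite updf_neq; auto. intro; subst; contradiction. }
    split; intros Hx.
    + subst. rewrite Nat.eqb_refl. reflexivity.
    + destruct (Nat.eqb_spec b x); [congruence|]. reflexivity.
Qed.

Lemma capcount_ext I s s' l k : cls s = cls s' -> capcount I s l k = capcount I s' l k.
Proof. intros H. unfold capcount, capped. rewrite H. reflexivity. Qed.

Definition newdom (s : st) (j : nat) : list nat :=
  if in_dec Nat.eq_dec j (dom s) then dom s else j :: dom s.

Lemma insert_spec I g Bc s j k s' b : 0 < g <= 1 -> CoreS I g Bc s ->
  (forall k', INR (capcount I s (newdom s j) k') <= g * INR (2 ^ k')) ->
  cls s j = k -> (j < length I)%nat -> sizeI I j <= / INR (2 ^ k) -> INR k <= Bc ->
  (In j (dom s) -> sld s (cfg s j) = false /\ forall k', cur s k' <> Some (cfg s j)) ->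
  insert s j k = (s', b) ->
  CoreS I g Bc s' /\ dom s' = newdom s j /\ cfg s' = updf (cfg s) j b /\ cls s' = cls s /\
  cr s' = cr s /\ Phi s' = Phi s /\
  (cnt s b < 2 ^ k)%nat /\ (forall i, In i (dom s) -> cfg s i = b -> cls s i = k) /\
  (In j (dom s) -> cfg s j <> b) /\
  (forall x, (x < FF s)%nat -> sld s x = false -> (forall k', cur s k' <> Some x) ->
     b <> x /\ sld s' x = false /\ (forall k', cur s' k' <> Some x) /\ bk s' x = bk s x) /\
  (forall X, S6X s X -> S6X s' X) /\ (S7 g s -> S7 g s') /\ (FF s <= FF s')%nat.
Proof.
  intros Hg HC Hcap Hk HjL Hjs HkB Hold Hins.
  unfold insert in Hins. destruct (open_bin s k) as [s1 b1] eqn:Eo.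
  injection Hins; intros <- <-. clear Hins.
  destruct (open_bin_spec I g Bc s k s1 b1 HC Eo) as
    [Ed [Ec [Ecl [Es [Er [Ecur [Ecur' [Ebk [Ebkb [HF [HbF [Hcnt [Hsb [Hor HPhi]]]]]]]]]]]]]].
  pose proof HC as [H1 [H2 [H3 [H4 H5]]]].
  assert (Hjb : In j (dom s) -> cfg s j <> b1).
  { intros Hj E. destruct (Hold Hj) as [Hs1 Hc1]. rewrite E in *. destruct Hor as [Hc|[Hb Hc]].
    apply (Hc1 k); auto. specialize (H2 j Hj). lia. }
  assert (Hcls_b : forall i, In i (dom s) -> cfg s i = b1 -> cls s i = k).
  { intros i Hi E. destruct (H2 i Hi) as [_ [Hlt [Hbk _]]]. rewrite <- Hbk, E.
    destruct Hor as [Hc|[Hb Hc]]. destruct (H3 _ _ Hc) as [_ [? _]]; auto. lia. }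
  assert (HC1 : CoreS I g Bc s1).
  { split; [rewrite Ed; auto|]. split; [|split; [|split]].
    - intros i Hi. rewrite Ed in Hi. rewrite Ec, Ecl. destruct (H2 i Hi) as [? [? [? [? ?]]]].
      rewrite Ebk by auto. repeat split; auto; lia.
    - intros k' x Hx. destruct (Nat.eq_dec k' k).
      + subst. rewrite Ecur in Hx. injection Hx; intros <-. repeat split; auto.
        unfold cnt in *. rewrite Ed, Ec. auto. rewrite Es; auto.
      + rewrite Ecur' in Hx by auto. destruct (H3 _ _ Hx) as [? [? [? ?]]].
        repeat split; try lia. rewrite Ebk; auto. unfold cnt in *; rewrite Ed, Ec; auto. rewrite Es; auto.
    - intros x Hx. rewrite Er, Es. apply H4. lia.
    - intros k'. rewrite Ed. rewrite <- (capcount_ext I s s1) by auto. auto. }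
  assert (Hdom1 : dom s1 = dom s) by exact Ed.
  assert (Hnd : newdom s1 j = newdom s j) by (unfold newdom; rewrite Ed; reflexivity).
  assert (Hcnt1 : forall x, cnt s1 x = cnt s x) by (intros; unfold cnt; rewrite Ed, Ec; reflexivity).
  assert (Hjb1 : In j (dom s1) -> cfg s1 j <> b1) by (rewrite Ed, Ec; auto).
  set (s2 := put s1 j b1).
  assert (Hc2b : cnt s2 b1 = S (cnt s b1)).
  { rewrite <- Hcnt1. apply (proj1 (cnt_put I g Bc s1 j b1 b1 HC1 Hjb1)). auto. }
  assert (Hc2x : forall x, x <> b1 -> (In j (dom s) -> cfg s j <> x) -> cnt s2 x = cnt s x).
  { intros x Hx Hjx. rewrite <- Hcnt1. apply (proj2 (cnt_put I g Bc s1 j b1 x HC1 Hjb1)); auto.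
    rewrite Ed, Ec; auto. }
  assert (Hsb1 : sld s1 b1 = false) by (rewrite Es; auto).
  assert (Hoth : forall x, sld s x = true \/ (exists k', cur s k' = Some x) -> In j (dom s) -> cfg s j <> x).
  { intros x [Hx|[k' Hx]] Hj E; destruct (Hold Hj) as [Hs Hc]; subst x. congruence. apply (Hc k'); auto. }
  set (full := Nat.eqb (cnt s2 b1) (2 ^ k)).
  set (s' := seal_if s2 k b1).
  assert (Ed' : dom s' = newdom s j) by (unfold s', seal_if; destruct (Nat.eqb (cnt s2 b1) (2^k)); simpl; rewrite <- Hnd; reflexivity).
  assert (Ec' : cfg s' = updf (cfg s) j b1) by (unfold s', seal_if; destruct (Nat.eqb (cnt s2 b1) (2^k)); simpl; rewrite Ec; reflexivity).
  assert (Ecl' : cls s' = cls s) by (unfold s', seal_if; destruct (Nat.eqb (cnt s2 b1) (2^k)); simpl; auto).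
  assert (Ebk' : bk s' = bk s1) by (unfold s', seal_if; destruct (Nat.eqb (cnt s2 b1) (2^k)); simpl; auto).
  assert (Er' : cr s' = cr s) by (unfold s', seal_if; destruct (Nat.eqb (cnt s2 b1) (2^k)); simpl; auto).
  assert (EF' : FF s' = FF s1) by (unfold s', seal_if; destruct (Nat.eqb (cnt s2 b1) (2^k)); simpl; auto).
  assert (Es' : forall x, sld s' x = if andb full (Nat.eqb x b1) then true else sld s x).
  { intros x. unfold s', seal_if, full. destruct (Nat.eqb (cnt s2 b1) (2^k)); simpl; rewrite ?Es; auto.
    destruct (Nat.eqb_spec x b1). subst; apply updf_eq. rewrite updf_neq; auto; rewrite Es; auto. }
  assert (Ecur'' : forall k', cur s' k' = if andb full (Nat.eqb k' k) then None else cur s1 k').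
  { intros k'. unfold s', seal_if, full. destruct (Nat.eqb (cnt s2 b1) (2^k)); simpl; auto.
    destruct (Nat.eqb_spec k' k). subst; apply updf_eq. rewrite updf_neq; auto. }
  assert (Ecnt' : forall x, cnt s' x = cnt s2 x) by (intros; unfold s', seal_if; destruct (Nat.eqb (cnt s2 b1) (2^k)); reflexivity).
  assert (Hfull : full = true -> cnt s2 b1 = (2 ^ k)%nat) by (unfold full; intros E; apply Nat.eqb_eq; auto).
  assert (Hnfull : full = false -> (cnt s2 b1 < 2 ^ k)%nat).
  { unfold full; intros E. apply Nat.eqb_neq in E. rewrite Hc2b in *. lia. }
  assert (Hb1F : (b1 < FF s1)%nat) by auto.
  clearbody full s'. clear Eo.
  assert (Hb1x : forall x, (x < FF s)%nat -> sld s x = false -> (forall k', cur s k' <> Some x) -> b1 <> x).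
  { intros x Hx Hsx Hcx E. subst x. destruct Hor as [Hc|[Hb _]]. apply (Hcx k); auto. lia. }
  assert (HS2' : forall i, In i (newdom s j) -> In i (dom s) /\ i <> j \/ i = j).
  { intros i Hi. unfold newdom in Hi. destruct (Nat.eq_dec i j); auto. left; split; auto.
    destruct (in_dec Nat.eq_dec j (dom s)); auto. destruct Hi; auto; congruence. }
  split; [|split; [|split; [|split; [|split; [|split; [|split; [|split; [|split; [|split; [|split; [|split]]]]]]]]]]].
  -
    split; [|split; [|split; [|split]]].
    + rewrite Ed'. unfold newdom. destruct (in_dec Nat.eq_dec j (dom s)); auto. constructor; auto.
    + intros i Hi. rewrite Ed' in Hi. rewrite Ec', Ecl', Ebk', EF'. destruct (HS2' i Hi) as [[Hi' Hij]|Hij].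
      * rewrite updf_neq by auto. destruct (H2 i Hi') as [? [? [? [? ?]]]]. rewrite Ebk by auto.
        repeat split; auto; lia.
      * subst i. rewrite updf_eq, Ebkb, Hk. repeat split; auto.
    + intros k' x Hx. rewrite Ecur'' in Hx. rewrite Ebk', EF', Es', Ecnt'.
      destruct (Nat.eq_dec k' k) as [Ek|Ek].
      * subst k'. rewrite Nat.eqb_refl, andb_true_r in Hx. destruct full eqn:Ef; [discriminate|].
        rewrite Ecur in Hx. injection Hx; intros <-. simpl. repeat split; auto.
      * rewrite (proj2 (Nat.eqb_neq _ _) Ek), andb_false_r in Hx. rewrite Ecur' in Hx by auto.
        destruct (H3 _ _ Hx) as [? [? [? ?]]].
        assert (Hxb : x <> b1). { intro; subst x. rewrite Ebk in Ebkb by auto. congruence. }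
        rewrite (proj2 (Nat.eqb_neq _ _) Hxb), andb_false_r. rewrite Ebk by auto.
        repeat split; auto; try lia. rewrite Hc2x; auto. apply Hoth. right; exists k'; auto.
    + intros x Hx. rewrite EF' in Hx. rewrite Er', Es'. assert (x <> b1) by lia.
      rewrite (proj2 (Nat.eqb_neq _ _) H), andb_false_r. apply H4; lia.
    + intros k'. rewrite Ed'. rewrite <- (capcount_ext I s) by auto. auto.
  - exact Ed'.
  - exact Ec'.
  - exact Ecl'.
  - exact Er'.
  - unfold Phi in *. rewrite Er', EF', <- HPhi, Er. reflexivity.
  - exact Hcnt.
  - exact Hcls_b.
  - exact Hjb.
  - intros x Hx Hsx Hcx. pose proof (Hb1x x Hx Hsx Hcx) as Hne. split; auto. split; [|split].
    + rewrite Es', (proj2 (Nat.eqb_neq _ _) (not_eq_sym Hne)), andb_false_r. auto.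
    + intros k' E. rewrite Ecur'' in E. destruct (andb full (Nat.eqb k' k)); [discriminate|].
      destruct (Nat.eq_dec k' k). subst. rewrite Ecur in E. congruence.
      rewrite Ecur' in E by auto. apply (Hcx k'); auto.
    + rewrite Ebk'. apply Ebk; auto.
  - intros X H6 i Hi HiX. rewrite Ed' in Hi. rewrite Ec' in *. rewrite Ebk', Es', Ecur''.
    destruct (HS2' i Hi) as [[Hi' Hij]|Hij].
    + rewrite updf_neq in * by auto. destruct (Nat.eq_dec (cfg s i) b1) as [E|E].
      * rewrite E, Nat.eqb_refl, andb_true_r, Ebkb. destruct full. left; auto. right.
        rewrite Nat.eqb_refl. simpl. auto.
      * rewrite (proj2 (Nat.eqb_neq _ _) E), andb_false_r. destruct (H6 i Hi' HiX) as [Hs|Hc]. left; auto.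
        right. destruct (H2 i Hi') as [_ [Hlt _]]. rewrite Ebk by auto.
        destruct (Nat.eq_dec (bk s (cfg s i)) k) as [Ek|Ek].
        -- exfalso. rewrite Ek in Hc. destruct Hor as [Hc'|[Hb Hc']]; congruence.
        -- rewrite (proj2 (Nat.eqb_neq _ _) Ek), andb_false_r. rewrite Ecur' by auto. auto.
    + subst i. rewrite updf_eq, Nat.eqb_refl, andb_true_r, Ebkb. destruct full. left; auto.
      right. rewrite Nat.eqb_refl. simpl. auto.
  - intros H7 x Hx. rewrite Es' in Hx. rewrite Ebk', Ecnt', Er'. destruct (Nat.eq_dec x b1).
    + subst x. rewrite Ebkb. destruct full eqn:Ef.
      * rewrite Hfull by auto. split. assert (0 <= INR (2 ^ k)) by apply pos_INR. nra. lia.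
      * simpl in Hx. congruence.
    + rewrite (proj2 (Nat.eqb_neq _ _) n), andb_false_r in Hx. destruct (H7 x Hx) as [Ha Hb].
      assert (x < FF s)%nat. { destruct (Nat.lt_ge_cases x (FF s)); auto. rewrite (proj2 (H4 x H)) in Hx; discriminate. }
      rewrite Ebk by auto. rewrite Hc2x; auto.
  - rewrite EF'. auto.
Qed.

Lemma load_bound I g Bc s c b k : CoreS I g Bc s -> Match s c ->
  (forall i, In i (dom s) -> cfg s i = b -> cls s i = k) ->
  load I c b <= INR (cnt s b) * / INR (2 ^ k).
Proof.
  intros HC [Mi Mo] Hk. pose proof HC as [H1 [H2 _]].
  unfold load. rewrite sumR_map. rewrite Rmult_comm. unfold cnt.
  apply sumR_bound_count. apply seq_NoDup. left; apply Rinv_0_lt_compat, INR_pow2_pos.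
  intros i _. destruct (in_dec Nat.eq_dec i (dom s)) as [Hi|Hi].
  - rewrite (Mi i Hi). destruct (Nat.eq_dec (cfg s i) b) as [E|E].
    + destruct (in_dec Nat.eq_dec i (filter (fun j => Nat.eqb (cfg s j) b) (dom s))) as [_|Hn].
      * destruct (H2 i Hi) as [_ [_ [_ [Hs _]]]]. rewrite (Hk i Hi E) in Hs. exact Hs.
      * exfalso. apply Hn. apply filter_In. split; auto. apply Nat.eqb_eq; auto.
    + destruct (in_dec _ _ _); [|lra]. left; apply Rinv_0_lt_compat, INR_pow2_pos.
  - rewrite (Mo i Hi). destruct (in_dec _ _ _); [|lra]. left; apply Rinv_0_lt_compat, INR_pow2_pos.
Qed.

Lemma cap_ok (ld sz : R) (n k : nat) : ld <= INR n * / INR (2 ^ k) -> (n < 2 ^ k)%nat ->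
  sz <= / INR (2 ^ k) -> ld + sz <= 1.
Proof.
  intros Hl Hn Hs. assert (INR n + 1 <= INR (2 ^ k)) by (rewrite <- S_INR; apply le_INR; lia).
  pose proof (INR_pow2_pos k).
  assert (INR n * / INR (2 ^ k) + / INR (2 ^ k) <= 1).
  { replace (INR n * / INR (2 ^ k) + / INR (2 ^ k)) with ((INR n + 1) / INR (2 ^ k)) by (field; lra).
    unfold Rdiv. apply Rmult_le_reg_r with (INR (2 ^ k)); auto. rewrite Rmult_assoc, Rinv_l by lra. lra. }
  lra.
Qed.

Lemma apply_moves_cons I c m ms :
  apply_moves I c (m :: ms) = match apply_move I c m with Some c1 => apply_moves I c1 ms | None => None end.
Proof.
  unfold apply_moves. simpl. destruct (apply_move I c m); auto.
  induction ms; simpl; auto.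
Qed.

Lemma Match_upd s c j b : In j (dom s) -> Match s c ->
  Match (mkSt (dom s) (updf (cfg s) j b) (cls s) (bk s) (sld s) (cr s) (cur s) (FF s)) (upd c j (Some b)).
Proof.
  intros Hj [Mi Mo]. split; simpl; intros i Hi; unfold upd, updf; destruct (Nat.eq_dec i j); subst; auto.
  contradiction.
Qed.

Lemma Match_ext s s' c : dom s' = dom s -> (forall i, cfg s' i = cfg s i) -> Match s c -> Match s' c.
Proof. intros Hd Hc [Mi Mo]. split; intros i Hi; rewrite Hd in *; auto. rewrite Hc; auto. Qed.

Lemma migr_spec I g Bc l : forall s c k b0 s' ms, 0 < g <= 1 -> CoreS I g Bc s -> Match s c ->
  S6X s b0 -> S7 g s -> NoDup l -> (forall j, In j l -> In j (dom s) /\ cfg s j = b0) ->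
  (b0 < FF s)%nat -> sld s b0 = false -> (forall k', cur s k' <> Some b0) -> bk s b0 = k ->
  migr s l k = (s', ms) ->
  CoreS I g Bc s' /\ (exists c', apply_moves I c ms = Some c' /\ Match s' c') /\
  S6X s' b0 /\ S7 g s' /\ dom s' = dom s /\ cls s' = cls s /\ cr s' = cr s /\ Phi s' = Phi s /\
  length ms = length l /\ (forall i, In i l -> cfg s' i <> b0) /\
  (forall i, ~ In i l -> cfg s' i = cfg s i) /\ sld s' b0 = false /\
  (forall k', cur s' k' <> Some b0) /\ bk s' b0 = bk s b0 /\ (b0 < FF s')%nat.
Proof.
  induction l as [|j l IH]; intros s c k b0 s' ms Hg HC HM H6 H7 Hnd Hl Hb0 Hsb Hcb Hbk Hm.
  - simpl in Hm. injection Hm; intros <- <-. split; [auto|]. split; [exists c; split; auto|].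
    repeat split; auto; try (simpl; intros; contradiction); apply H7; auto.
  - simpl in Hm. destruct (insert s j k) as [s1 b] eqn:Ei. destruct (migr s1 l k) as [s2 ms2] eqn:Em.
    injection Hm; intros <- <-. clear Hm.
    destruct (Hl j (or_introl eq_refl)) as [Hjd Hjb0].
    pose proof HC as [H1 [H2 [H3 [H4 H5]]]].
    destruct (H2 j Hjd) as [HjL [_ [Hbkj [Hjs HjB]]]].
    assert (Hclsj : cls s j = k) by (rewrite <- Hbkj, Hjb0; auto).
    assert (Hnew : newdom s j = dom s) by (unfold newdom; destruct (in_dec Nat.eq_dec j (dom s)); tauto).
    assert (P1 : forall k', INR (capcount I s (newdom s j) k') <= g * INR (2 ^ k')) by (intros k'; rewrite Hnew; auto).
    assert (P2 : sizeI I j <= / INR (2 ^ k)) by (rewrite <- Hclsj; auto).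
    assert (P3 : INR k <= Bc) by (rewrite <- Hclsj; auto).
    assert (P4 : In j (dom s) -> sld s (cfg s j) = false /\ forall k', cur s k' <> Some (cfg s j)) by (intros _; rewrite Hjb0; auto).
    destruct (insert_spec I g Bc s j k s1 b Hg HC P1 Hclsj HjL P2 P3 P4 Ei) as
      [HC1 [Ed1 [Ec1 [Ecl1 [Er1 [HP1 [Hcnt [Hclsb [Hjb [Hx [H61 [H71 HF1]]]]]]]]]]]].
    destruct (Hx b0 Hb0 Hsb Hcb) as [Hbb0 [Hsb1 [Hcb1 Hbk1]]].
    rewrite Hnew in Ed1.
    assert (Hmove : apply_move I c (j, b) = Some (upd c j (Some b))).
    { unfold apply_move. destruct HM as [Mi Mo]. rewrite (Mi j Hjd).
      destruct (Rle_dec (load I c b + size (itm I j)) 1) as [_|Hn]; auto. exfalso; apply Hn.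
      apply cap_ok with (cnt s b) k; auto. apply (load_bound I g Bc s c b k HC); auto. split; auto.
      }
    assert (HM1 : Match s1 (upd c j (Some b))).
    { apply Match_ext with (mkSt (dom s) (updf (cfg s) j b) (cls s) (bk s) (sld s) (cr s) (cur s) (FF s)).
      simpl; auto. intros; simpl; rewrite Ec1; auto. apply Match_upd; auto. }
    assert (Q1 : NoDup l) by (inversion Hnd; auto).
    assert (Q2 : forall j', In j' l -> In j' (dom s1) /\ cfg s1 j' = b0).
    { intros j' Hj'. destruct (Hl j' (or_intror Hj')) as [? ?]. rewrite Ed1, Ec1. split; auto.
      rewrite updf_neq; auto. intro; subst. inversion Hnd; contradiction. }
    assert (Q3 : (b0 < FF s1)%nat) by lia.
    assert (Q4 : bk s1 b0 = k) by (rewrite Hbk1; auto).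
    destruct (IH s1 (upd c j (Some b)) k b0 s2 ms2 Hg HC1 HM1 (H61 _ H6) (H71 H7) Q1 Q2 Q3 Hsb1 Hcb1 Q4 Em) as
      [HC2 [[c2 [Ha2 HM2]] [H62 [H72 [Ed2 [Ecl2 [Er2 [HP2 [Hlen [Hout [Hin [Hsb2 [Hcb2 [Hbk2 HF2]]]]]]]]]]]]]].
    split; auto. split. exists c2. split; auto. rewrite apply_moves_cons, Hmove. auto.
    split; [exact H62|]. split; [exact H72|]. repeat split; auto.
    + rewrite Ed2, Ed1; auto.
    + rewrite Ecl2, Ecl1; auto.
    + rewrite Er2, Er1; auto.
    + rewrite HP2, HP1; auto.
    + simpl. rewrite Hlen. auto.
    + intros i [Hi|Hi].
      * subst i. rewrite Hin. rewrite Ec1, updf_eq. auto. inversion Hnd; auto.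
      * apply Hout; auto.
    + intros i Hi. rewrite Hin by (intro; apply Hi; right; auto). rewrite Ec1, updf_neq; auto.
      intro; subst; apply Hi; left; auto.
    + rewrite Hbk2, Hbk1; auto.
Qed.

Definition S6 (s : st) : Prop :=
  forall i, In i (dom s) -> sld s (cfg s i) = true \/ cur s (bk s (cfg s i)) = Some (cfg s i).

Lemma sumR_updf l f b v : NoDup l -> In b l ->
  sumR l (fun i => INR (updf f b v i)) = sumR l (fun i => INR (f i)) - INR (f b) + INR v.
Proof.
  intros Hnd Hb.
  transitivity (sumR l (fun i => INR (f i) + (if Nat.eqb b i then INR v - INR (f b) else 0))).
  - apply sumR_ext. intros i _. unfold updf. destruct (Nat.eq_dec i b); destruct (Nat.eqb_spec b i); subst; try congruence; lra.
  - rewrite sumR_plus, sumR_indicator by auto. destruct (in_dec Nat.eq_dec b l); [lra|contradiction].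
Qed.

Lemma filter_filter {A} (p q : A -> bool) l : filter q (filter p l) = filter (fun x => andb (p x) (q x)) l.
Proof. induction l; simpl; [reflexivity|]. destruct (p a); simpl; [destruct (q a); simpl|]; rewrite IHl; reflexivity. Qed.

Lemma filter_sub_length (p q : nat -> bool) l : (forall x, q x = true -> p x = true) ->
  (length (filter q l) <= length (filter p l))%nat.
Proof. intros H. induction l; simpl; auto. destruct (q a) eqn:E. rewrite (H a E). simpl; lia. destruct (p a); simpl; lia. Qed.

Lemma cnt_filter_dom s s' i x : dom s' = filter (fun j => negb (Nat.eqb j i)) (dom s) -> cfg s' = cfg s ->
  NoDup (dom s) -> In i (dom s) ->
  (cnt s' x + (if Nat.eqb (cfg s i) x then 1 else 0) = cnt s x)%nat.
Proof.
  intros Hd Hc Hnd Hi. unfold cnt. rewrite Hd, Hc. rewrite filter_filter.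
  clear Hd Hc. induction Hnd as [|a l Hna Hnd IH]. contradiction.
  cbn [filter]. destruct (Nat.eq_dec a i).
  - subst a. rewrite Nat.eqb_refl. simpl. rewrite (filter_ext_in (fun y => negb (Nat.eqb y i) && Nat.eqb (cfg s y) x) (fun y => Nat.eqb (cfg s y) x)).
    destruct (Nat.eqb (cfg s i) x); simpl; lia.
    intros y Hy. destruct (Nat.eqb_spec y i). subst; contradiction. reflexivity.
  - destruct Hi as [Hi|Hi]; [congruence|]. rewrite (proj2 (Nat.eqb_neq _ _) n). simpl.
    specialize (IH Hi). destruct (Nat.eqb (cfg s a) x); simpl; lia.
Qed.

Lemma dep_spec I g Bc s c i s' ms : 0 < g < 1 -> CoreS I g Bc s -> Match s c -> S6 s -> S7 g s ->
  dep g s i = (s', ms) ->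
  CoreS I g Bc s' /\ (exists c', apply_moves I (upd c i None) ms = Some c' /\ Match s' c') /\
  S6 s' /\ S7 g s' /\ (forall j, In j (dom s') <-> In j (dom s) /\ j <> i) /\
  INR (length ms) + (g / (1 - g)) * Phi s' <= (g / (1 - g)) * Phi s + g / (1 - g).
Proof.
  intros Hg HC HM H6 H7 Hd.
  assert (Hr : 0 < g / (1 - g)) by (apply Rdiv_lt_0_compat; lra).
  pose proof HC as [H1 [H2 [H3 [H4 H5]]]].
  unfold dep in Hd. destruct (in_dec Nat.eq_dec i (dom s)) as [Hi|Hi].
  2:{ injection Hd; intros <- <-. split; auto. split. exists (upd c i None). split; auto.
      destruct HM as [Mi Mo]. split; intros j Hj; unfold upd; destruct (Nat.eq_dec j i); subst; auto. contradiction.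
      split; auto. split; auto. split. intros j; split; intros Hj. split; auto. intro; subst; contradiction. tauto.
      simpl. lra. }
  set (b := cfg s i) in *.
  set (s1 := mkSt (filter (fun j => negb (Nat.eqb j i)) (dom s)) (cfg s) (cls s) (bk s) (sld s) (cr s) (cur s) (FF s)) in *.
  assert (Hin1 : forall j, In j (dom s1) <-> In j (dom s) /\ j <> i).
  { intros j. simpl. rewrite filter_In. destruct (Nat.eqb_spec j i); simpl; intuition. }
  assert (Hcnt1 : forall x, (cnt s1 x + (if Nat.eqb b x then 1 else 0) = cnt s x)%nat).
  { intros x. apply cnt_filter_dom; auto. }
  assert (Hcnt1' : forall x, x <> b -> cnt s1 x = cnt s x).
  { intros x Hx. specialize (Hcnt1 x). destruct (Nat.eqb_spec b x); [congruence|]. lia. }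
  assert (HC1 : CoreS I g Bc s1).
  { split; [|split; [|split; [|split]]].
    - simpl. apply NoDup_filter; auto.
    - intros j Hj. apply Hin1 in Hj. apply H2; tauto.
    - intros k x Hx. destruct (H3 k x Hx) as [? [? [? ?]]]. repeat split; auto. specialize (Hcnt1 x). simpl in *. lia.
    - exact H4.
    - intros k. eapply Rle_trans; [|apply (H5 k)]. apply le_INR. unfold capcount. simpl. rewrite filter_filter.
      apply filter_sub_length. intros x Hx. apply andb_prop in Hx. tauto. }
  assert (HM1 : Match s1 (upd c i None)).
  { destruct HM as [Mi Mo]. split; intros j Hj; unfold upd; destruct (Nat.eq_dec j i); auto.
    - subst. apply Hin1 in Hj. tauto.
    - apply Mi. apply Hin1 in Hj. tauto.
    - apply Mo. intro. apply Hj. apply Hin1. auto. }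
  assert (H61 : S6 s1) by (intros j Hj; apply H6; apply Hin1 in Hj; tauto).
  assert (Hbf : forall x, sld s x = true -> (x < FF s)%nat).
  { intros x Hx. destruct (Nat.lt_ge_cases x (FF s)); auto. rewrite (proj2 (H4 x H)) in Hx. discriminate. }
  destruct (sld s b) eqn:Hsb.
  2:{ simpl in Hd. rewrite Hsb in Hd. injection Hd; intros <- <-. split; auto. split. exists (upd c i None); split; auto.
      split; auto. split.
      - intros x Hx. simpl in Hx. destruct (Nat.eq_dec x b). subst; congruence. simpl. rewrite Hcnt1' by auto. apply H7; auto.
      - split; auto. simpl. unfold Phi; simpl. lra. }
  simpl in Hd. rewrite Hsb in Hd.
  set (s2 := mkSt (dom s1) (cfg s1) (cls s1) (bk s1) (sld s1) (updf (cr s1) b (S (cr s1 b))) (cur s1) (FF s1)) in *.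
  assert (HbF : (b < FF s)%nat) by auto.
  assert (HP2 : Phi s2 = Phi s + 1).
  { unfold Phi. simpl. rewrite sumR_updf. rewrite S_INR. lra. apply seq_NoDup. apply in_seq. lia. }
  assert (Hcnt2 : forall x, cnt s2 x = cnt s1 x) by reflexivity.
  assert (HC2 : CoreS I g Bc s2).
  { destruct HC1 as [A1 [A2 [A3 [A4 A5]]]]. split; [|split; [|split; [|split]]]; auto.
    intros x Hx. simpl in *. rewrite updf_neq by lia. apply A4; auto. }
  assert (H72 : forall x, x <> b -> sld s2 x = true -> g * INR (2 ^ bk s2 x) <= INR (cnt s2 x) /\ (2 ^ bk s2 x <= cnt s2 x + cr s2 x)%nat).
  { intros x Hx Hs. simpl in *. rewrite Hcnt2, Hcnt1' by auto. rewrite updf_neq by auto. apply H7; auto. }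
  assert (H7b : (2 ^ bk s b <= cnt s2 b + cr s2 b)%nat).
  { simpl. rewrite updf_eq. specialize (Hcnt1 b). rewrite Nat.eqb_refl in Hcnt1. destruct (H7 b Hsb). unfold cnt in *. simpl in *. lia. }
  match type of Hd with context [Rlt_dec ?a ?b] => destruct (Rlt_dec a b) as [Hlt|Hge] end.
  2:{ injection Hd; intros <- <-. split; auto. split. exists (upd c i None); split; auto.
      split; auto. split.
      - intros x Hx. destruct (Nat.eq_dec x b). subst x. split; [apply Rnot_lt_le in Hge; exact Hge|auto]. apply H72; auto.
      - split; auto. change (INR (length (@nil (nat*nat))) + g / (1 - g) * Phi s2 <= g / (1 - g) * Phi s + g / (1 - g)). simpl length. rewrite HP2. simpl INR. lra. }
  set (s3 := mkSt (dom s2) (cfg s2) (cls s2) (bk s2) (updf (sld s2) b false) (updf (cr s2) b O) (cur s2) (FF s2)) in *.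
  assert (HP3 : Phi s3 = Phi s - INR (cr s b)).
  { unfold Phi. change (FF s3) with (FF s). change (cr s3) with (updf (cr s2) b O). rewrite sumR_updf.
    change (sumR (seq 0 (FF s)) (fun i => INR (cr s2 i))) with (Phi s2). rewrite HP2. simpl. rewrite updf_eq. rewrite S_INR. unfold Phi. lra. apply seq_NoDup. apply in_seq. lia. }
  assert (Hnotcur : forall k', cur s k' <> Some b).
  { intros k' E. destruct (H3 _ _ E) as [_ [_ [_ Hs]]]. congruence. }
  assert (HC3 : CoreS I g Bc s3).
  { destruct HC1 as [A1 [A2 [A3 [A4 A5]]]]. split; [|split; [|split; [|split]]]; auto.
    - intros k x Hx. destruct (A3 k x Hx) as [? [? [? ?]]]. simpl. repeat split; auto. rewrite updf_neq; auto.
      intro E. rewrite E in Hx. apply (Hnotcur k); exact Hx.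
    - intros x Hx. simpl in *. rewrite !updf_neq by lia. apply A4; auto. }
  assert (HM3 : Match s3 (upd c i None)) by (destruct HM1; split; auto).
  assert (H63 : S6X s3 b).
  { intros j Hj Hjb. simpl in *. rewrite updf_neq by auto. apply H61; auto. }
  assert (H73 : S7 g s3).
  { intros x Hx. simpl in Hx. destruct (Nat.eq_dec x b). subst; rewrite updf_eq in Hx; discriminate.
    rewrite updf_neq in Hx by auto. simpl. rewrite updf_neq by auto. pose proof (H72 x n Hx). simpl in H. rewrite updf_neq in H by auto. rewrite updf_neq by auto. exact H. }
  set (l := filter (fun j => Nat.eqb (cfg s3 j) b) (dom s3)) in *.
  assert (Q0 : 0 < g <= 1) by lra.
  assert (Q1 : NoDup l) by (apply NoDup_filter; simpl; apply NoDup_filter; auto).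
  assert (Q2 : forall j, In j l -> In j (dom s3) /\ cfg s3 j = b).
  { intros j Hj. unfold l in Hj. apply filter_In in Hj. destruct Hj as [? Hj]. apply Nat.eqb_eq in Hj. auto. }
  assert (Q3 : (b < FF s3)%nat) by (simpl; auto).
  assert (Q4 : sld s3 b = false) by (simpl; apply updf_eq).
  assert (Q5 : forall k', cur s3 k' <> Some b) by (intros k'; simpl; apply Hnotcur).
  destruct (migr_spec I g Bc l s3 (upd c i None) (bk s3 b) b s' ms Q0 HC3 HM3 H63 H73 Q1 Q2 Q3 Q4 Q5 eq_refl Hd) as
    [HC' [[c' [Ha' HM']] [H6' [H7' [Ed' [Ecl' [Er' [HP' [Hlen [Hout [Hin [_ [_ [_ _]]]]]]]]]]]]]].
  split; auto. split. exists c'; split; auto. split; [|split; [|split]].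
  - intros j Hj. assert (cfg s' j <> b).
    { destruct (in_dec Nat.eq_dec j l). apply Hout; auto. rewrite Hin by auto. intro E. apply n.
      unfold l. apply filter_In. split. rewrite <- Ed'; auto. apply Nat.eqb_eq; auto. }
    apply H6'; auto.
  - exact H7'.
  - intros j. rewrite Ed'. exact (Hin1 j).
  - rewrite HP', HP3. rewrite Hlen. unfold l. fold (cnt s3 b). change (cnt s3 b) with (cnt s2 b).
    change (INR (cnt s2 b) < g * INR (2 ^ bk s b)) in Hlt. change (cr s2 b) with (updf (cr s) b (S (cr s b)) b) in H7b.
    rewrite updf_eq in H7b.
    assert (Hm : INR (2 ^ bk s b) <= INR (cnt s2 b) + (INR (cr s b) + 1)).
    { rewrite <- S_INR, <- plus_INR. apply le_INR. lia. }
    assert (INR (cnt s2 b) <= g / (1 - g) * (INR (cr s b) + 1)).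
    { assert (g * INR (2 ^ bk s b) <= g * (INR (cnt s2 b) + (INR (cr s b) + 1))) by (apply Rmult_le_compat_l; lra).
      assert (INR (cnt s2 b) * (1 - g) <= g * (INR (cr s b) + 1)) by lra.
      replace (g / (1 - g) * (INR (cr s b) + 1)) with ((g * (INR (cr s b) + 1)) / (1 - g)) by (field; lra).
      apply Rmult_le_reg_r with (1 - g); [lra|]. unfold Rdiv. rewrite Rmult_assoc, Rinv_l by lra. lra. }
    lra.
Qed.

Lemma findc_spec sz fuel : forall k, let r := findc sz k fuel in
  (k <= r <= k + fuel)%nat /\ (sz <= / INR (2 ^ k) -> sz <= / INR (2 ^ r)) /\
  (sz <= / INR (2 ^ S r) -> r = (k + fuel)%nat).
Proof.
  induction fuel; intros k; cbn [findc].
  - split; [lia|]. split; auto.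
  - destruct (Rlt_dec (/ INR (2 ^ S k)) sz) as [Hl|Hl].
    + split; [lia|]. split; auto. intros H. exfalso. lra.
    + destruct (IHfuel (S k)) as [A [B C]]. split; [lia|]. split.
      * intros _. apply B. lra.
      * intros H. rewrite (C H). lia.
Qed.

Lemma clsf_spec sz cap : 0 <= sz <= 1 ->
  (clsf sz cap <= cap)%nat /\ sz <= / INR (2 ^ clsf sz cap) /\
  (sz <= / INR (2 ^ S (clsf sz cap)) -> clsf sz cap = cap).
Proof.
  intros Hs. unfold clsf. destruct (findc_spec sz cap 0) as [A [B C]]. simpl in *.
  split; [lia|]. split. apply B. rewrite Rinv_1. lra. intros H. rewrite (C H). lia.
Qed.

Lemma capf_spec g P : 0 < g < 1 -> (1 <= P)%nat ->
  INR P <= g * INR (2 ^ capf g P) /\ INR (capf g P) <= ln (INR P / g) / ln 2 + 1.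
Proof.
  intros Hg HP. unfold capf. set (y := ln (INR P / g) / ln 2).
  assert (Hl2 : 0 < ln 2) by (pose proof ln_lt_2; lra).
  assert (HPg : 1 < INR P / g).
  { assert (1 <= INR P) by (replace 1 with (INR 1) by reflexivity; apply le_INR; lia).
    apply Rmult_lt_reg_r with g; [lra|]. unfold Rdiv. rewrite Rmult_assoc, Rinv_l by lra. lra. }
  assert (Hy : 0 < y).
  { unfold y. apply Rdiv_lt_0_compat; auto. rewrite <- ln_1. apply ln_increasing; lra. }
  destruct (archimed y) as [A1 A2].
  assert (Hup : (0 <= up y)%Z). { apply le_IZR. lra. }
  assert (HINR : INR (Z.to_nat (up y)) = IZR (up y)).
  { rewrite INR_IZR_INZ. rewrite Z2Nat.id; auto. }
  rewrite HINR. split; [|lra].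
  set (n := Z.to_nat (up y)) in *.
  assert (Hn : ln (INR P / g) < INR n * ln 2).
  { assert (Ey : y = ln (INR P / g) * / ln 2) by reflexivity.
    rewrite HINR. apply Rmult_lt_reg_r with (/ ln 2). apply Rinv_0_lt_compat; auto.
    rewrite Rmult_assoc, Rinv_r by lra. rewrite <- Ey. lra. }
  rewrite <- ln_pow in Hn by lra.
  apply ln_lt_inv in Hn; [| lra | apply pow_lt; lra].
  rewrite pow_INR. replace (INR 2) with 2 by (simpl; lra).
  assert (INR P = g * (INR P / g)) by (field; lra).
  rewrite H. apply Rmult_le_compat_l; lra.
Qed.

Lemma capcount_cons I s j l k : capcount I s (j :: l) k =
  ((if andb (Nat.eqb (cls s j) k) (capped I s j) then 1 else 0) + capcount I s l k)%nat.
Proof. unfold capcount. cbn [filter]. destruct (andb _ _); reflexivity. Qed.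

Lemma capcount_le_len I s l k : (capcount I s l k <= length l)%nat.
Proof. unfold capcount. induction l; simpl; auto. destruct (andb _ _); simpl; lia. Qed.

Lemma arr_spec I g Bc s c i s' b : 0 < g < 1 -> CoreS I g Bc s -> Match s c -> S6 s -> S7 g s ->
  ~ In i (dom s) -> (i < length I)%nat -> 0 <= sizeI I i <= 1 ->
  INR (capf g (S (length (dom s)))) <= Bc ->
  arrv g s i (sizeI I i) = (s', b) ->
  CoreS I g Bc s' /\ load I c b + sizeI I i <= 1 /\ Match s' (upd c i (Some b)) /\
  S6 s' /\ S7 g s' /\ dom s' = i :: dom s /\ Phi s' = Phi s.
Proof.
  intros Hg HC HM H6 H7 Hi HiL Hsz HB Ha.
  unfold arrv in Ha. set (P := S (length (dom s))) in *.
  set (cap := capf g P) in *. set (k := clsf (sizeI I i) cap) in *.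
  destruct (clsf_spec (sizeI I i) cap Hsz) as [K1 [K2 K3]]. fold k in K1, K2, K3.
  destruct (capf_spec g P Hg ltac:(unfold P; lia)) as [C1 C2]. fold cap in C1, C2.
  set (s0 := mkSt (dom s) (cfg s) (updf (cls s) i k) (bk s) (sld s) (cr s) (cur s) (FF s)) in *.
  pose proof HC as [H1 [H2 [H3 [H4 H5]]]].
  assert (Hcl0 : forall j, In j (dom s) -> cls s0 j = cls s j).
  { intros j Hj. simpl. rewrite updf_neq; auto. intro; subst; contradiction. }
  assert (Hcc : forall l k', (forall j, In j l -> j <> i) -> capcount I s0 l k' = capcount I s l k').
  { intros l k' Hl. unfold capcount. apply f_equal. apply filter_ext_in. intros j Hj.
    unfold capped. simpl. rewrite updf_neq; auto. }
  assert (HkB : INR k <= Bc).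
  { eapply Rle_trans; [|exact HB]. apply le_INR. auto. }
  assert (HC0 : CoreS I g Bc s0).
  { split; [|split; [|split; [|split]]]; auto.
    - intros j Hj. simpl. rewrite updf_neq by (intro; subst; contradiction). auto.
    - intros k'. simpl dom. rewrite Hcc. auto. intros j Hj E; subst; contradiction. }
  assert (Hcap : forall k', INR (capcount I s0 (newdom s0 i) k') <= g * INR (2 ^ k')).
  { intros k'. unfold newdom. simpl dom. destruct (in_dec Nat.eq_dec i (dom s)); [contradiction|].
    rewrite capcount_cons. rewrite Hcc by (intros j Hj E; subst; contradiction).
    unfold capped. simpl cls. rewrite updf_eq.
    destruct (Nat.eqb_spec k k'); [|cbn [andb]; rewrite Nat.add_0_l; auto].
    destruct (Rle_dec (sizeI I i) (/ INR (2 ^ S k))) as [Hc|Hc]; cbn [andb]; [|rewrite Nat.add_0_l; auto].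
    subst k'. rewrite (K3 Hc). eapply Rle_trans; [|exact C1].
    apply le_INR. pose proof (capcount_le_len I s (dom s) cap). unfold P. simpl. apply le_n_S. exact H. }
  assert (Hold : In i (dom s0) -> sld s0 (cfg s0 i) = false /\ forall k', cur s0 k' <> Some (cfg s0 i)).
  { simpl. intros; contradiction. }
  assert (Hclsi : cls s0 i = k) by (simpl; apply updf_eq).
  destruct (insert_spec I g Bc s0 i k s' b ltac:(lra) HC0 Hcap Hclsi HiL K2 HkB Hold Ha) as
    [HC' [Ed' [Ec' [Ecl' [Er' [HP' [Hcnt [Hclsb [Hjb [Hx [H6' [H7' HF']]]]]]]]]]]].
  assert (Hnd : newdom s0 i = i :: dom s).
  { unfold newdom. simpl. destruct (in_dec Nat.eq_dec i (dom s)); [contradiction|auto]. }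
  rewrite Hnd in Ed'.
  split; auto. split.
  - apply cap_ok with (cnt s0 b) k; auto.
    apply (load_bound I g Bc s0 c b k HC0); auto.
  - split.
    + destruct HM as [Mi Mo]. split; intros j Hj; rewrite Ed' in Hj; unfold upd; rewrite ?Ec';
        destruct (Nat.eq_dec j i); subst.
      * rewrite updf_eq; auto.
      * rewrite updf_neq by auto. apply Mi. destruct Hj; auto; congruence.
      * exfalso; apply Hj; left; auto.
      * apply Mo. intro; apply Hj; right; auto.
    + split; [|split; [|split]].
      * intros j Hj. assert (Hx6 : S6X s0 (FF s')) by (intros x Hx0 _; apply H6; auto).
        apply (H6' _ Hx6 j Hj). destruct HC' as [_ [A2 _]]. specialize (A2 j Hj). lia.
      * apply H7'. exact H7.
      * exact Ed'.
      * rewrite HP'. reflexivity.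
Qed.

Lemma run_aux_snoc I A p e : forall h c,
  run_aux I A h c (p ++ [e]) =
  match run_aux I A h c p with
  | Some c' => process I A (h ++ map (obs_of I) p) c' e
  | None => None
  end.
Proof.
  induction p as [|a p IH]; intros h c; simpl.
  - rewrite app_nil_r. destruct (process I A h c e); reflexivity.
  - destruct (process I A h c a) as [c1|]; auto. rewrite IH. rewrite <- app_assoc. reflexivity.
Qed.

Lemma run_snoc I A p e : run I A (p ++ [e]) =
  match run I A p with Some c' => process I A (map (obs_of I) p) c' e | None => None end.
Proof. unfold run. rewrite run_aux_snoc. reflexivity. Qed.

Lemma fold_add_app l1 l2 : fold_right Nat.add 0%nat (l1 ++ l2) = (fold_right Nat.add 0%nat l1 + fold_right Nat.add 0%nat l2)%nat.
Proof. induction l1; simpl; lia. Qed.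

Lemma migrations_snoc I A p e : migrations I A (p ++ [e]) =
  (migrations I A p + length (moves (A (map (obs_of I) (p ++ [e])))))%nat.
Proof.
  unfold migrations. rewrite length_app. replace (length p + length [e])%nat with (S (length p)) by (simpl; lia). rewrite seq_S, map_app, fold_add_app.
  f_equal.
  - f_equal. apply map_ext_in. intros k Hk. apply in_seq in Hk. rewrite firstn_app.
    replace (S k - length p)%nat with 0%nat by lia. rewrite app_nil_r. reflexivity.
  - cbn [map fold_right]. rewrite Nat.add_0_l, Nat.add_0_r, firstn_all2. reflexivity. rewrite length_app; simpl; lia.
Qed.

Lemma ev_le_time I x y : ev_le I x y -> ev_time I x <= ev_time I y.
Proof. intros [H|[H _]]; lra. Qed.

Lemma sorted_app {A} (R : A -> A -> Prop) l1 l2 : StronglySorted R (l1 ++ l2) ->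
  forall x y, In x l1 -> In y l2 -> R x y.
Proof.
  induction l1; simpl; intros H x y Hx Hy. contradiction.
  inversion H; subst. destruct Hx as [Hx|Hx].
  - subst. rewrite Forall_forall in H3. apply H3. apply in_or_app; auto.
  - apply IHl1; auto.
Qed.

Lemma all_events_In I e : In e (all_events I) <->
  match e with Arr i => (i < length I)%nat | Dep i => (i < length I)%nat end.
Proof.
  unfold all_events. rewrite in_app_iff, !in_map_iff. destruct e as [i|i]; split.
  - intros [[j [E Hj]]|[j [E Hj]]]; try discriminate. injection E; intros; subst. apply in_seq in Hj. lia.
  - intros H. left. exists i. split; auto. apply in_seq. lia.
  - intros [[j [E Hj]]|[j [E Hj]]]; try discriminate. injection E; intros; subst. apply in_seq in Hj. lia.
  - intros H. right. exists i. split; auto. apply in_seq. lia.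
Qed.

Lemma NoDup_all_events I : NoDup (all_events I).
Proof.
  unfold all_events. apply NoDup_app.
  - apply FinFun.Injective_map_NoDup. intros a b E; injection E; auto. apply seq_NoDup.
  - apply FinFun.Injective_map_NoDup. intros a b E; injection E; auto. apply seq_NoDup.
  - intros a Ha Hb. apply in_map_iff in Ha, Hb. destruct Ha as [? [E1 _]]. destruct Hb as [? [E2 _]]. subst. discriminate.
Qed.

Lemma count_deps I es : Permutation es (all_events I) -> length (filter is_dep es) = length I.
Proof.
  intros H. rewrite (perm_filter_length _ _ _ H). unfold all_events. rewrite filter_app.
  rewrite length_app.
  assert (filter is_dep (map Arr (seq 0 (length I))) = []).
  { induction (seq 0 (length I)); simpl; auto. }
  assert (filter is_dep (map Dep (seq 0 (length I))) = map Dep (seq 0 (length I))).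
  { induction (seq 0 (length I)); simpl; auto. f_equal; auto. }
  rewrite H0, H1. simpl. rewrite length_map, length_seq. reflexivity.
Qed.

Definition Bcf (g : R) (rho : nat) : R := ln (INR rho / g) / ln 2 + 1.

Lemma valid_nth I i : Forall valid_item I -> (i < length I)%nat -> valid_item (itm I i).
Proof. intros H Hi. rewrite Forall_forall in H. apply H. apply nth_In. auto. Qed.

Lemma present_In I t j : In j (present_items I t) <->
  (j < length I)%nat /\ arr (itm I j) <= t /\ t < arr (itm I j) + dur (itm I j).
Proof.
  unfold present_items. rewrite filter_In, in_seq. unfold present_b.
  destruct (Rle_dec _ _) as [H1|H1]; [destruct (Rlt_dec _ _) as [H2|H2]|]; split; intros H.
  - split; [lia|]. auto.
  - split; [lia|reflexivity].
  - destruct H; discriminate.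
  - destruct H as [_ [_ H]]; contradiction.
  - destruct H; discriminate.
  - destruct H as [_ [H _]]; contradiction.
Qed.

Lemma ln_le_mono x y : 0 < x -> x <= y -> ln x <= ln y.
Proof. intros Hx [H|H]. left; apply ln_increasing; auto. subst; lra. Qed.

Lemma CoreS_init I g Bc : 0 < g -> CoreS I g Bc init.
Proof.
  intros Hg. split; [constructor|]. split; [simpl; tauto|]. split; [simpl; intros; discriminate|].
  split; [simpl; auto|]. intros k. unfold capcount. simpl. apply Rmult_le_pos; [lra|apply pos_INR].
Qed.

Lemma main_inv I g rho es : 0 < g < 1 -> Forall valid_item I -> valid_order I es ->
  (forall t, (n_present I t <= rho)%nat) ->
  forall p q, p ++ q = es ->
  exists c, run I (Alg g) p = Some c /\
   CoreS I g (Bcf g rho) (stOf g (map (obs_of I) p)) /\ Match (stOf g (map (obs_of I) p)) c /\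
   S6 (stOf g (map (obs_of I) p)) /\ S7 g (stOf g (map (obs_of I) p)) /\
   (forall j, In j (dom (stOf g (map (obs_of I) p))) -> In (Arr j) p /\ ~ In (Dep j) p) /\
   INR (migrations I (Alg g) p) + (g / (1 - g)) * Phi (stOf g (map (obs_of I) p)) <=
     (g / (1 - g)) * INR (length (filter is_dep p)).
Proof.
  intros Hg HV [Hperm Hsort] Hrho.
  assert (Hnd : NoDup es) by (apply Permutation_NoDup with (all_events I); [apply Permutation_sym; auto|apply NoDup_all_events]).
  assert (Hes : forall e, In e es -> match e with Arr i => (i < length I)%nat | Dep i => (i < length I)%nat end).
  { intros e He. apply all_events_In. apply Permutation_in with es; auto. }
  assert (HesD : forall i, (i < length I)%nat -> In (Dep i) es).
  { intros i Hi. apply Permutation_in with (all_events I). apply Permutation_sym; auto. apply all_events_In; auto. }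
  assert (Hr : 0 < g / (1 - g)) by (apply Rdiv_lt_0_compat; lra).
  intros p. induction p as [|e p IH] using rev_ind; intros q Hpq.
  - exists (fun _ => None). split; [reflexivity|]. simpl.
    split; [apply CoreS_init; lra|]. split; [split; simpl; intros; tauto|].
    split; [intros i Hi; contradiction|]. split; [intros b Hb; discriminate|].
    split; [intros; contradiction|]. unfold migrations, Phi. simpl. lra.
  - destruct (IH (e :: q)) as [c [Hrun [HC [HM [H6 [H7 [Hdom Hpot]]]]]]].
    { rewrite <- Hpq, <- app_assoc. reflexivity. }
    set (s := stOf g (map (obs_of I) p)) in *.
    assert (Hord : forall x y, In x p -> In y (e :: q) -> ev_le I x y).
    { intros x y Hx Hy. apply (sorted_app (ev_le I) p (e :: q)); auto. rewrite <- app_assoc in Hpq. simpl in Hpq. rewrite Hpq. auto. }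
    assert (Hord2 : forall y, In y q -> ev_le I e y).
    { intros y Hy. apply (sorted_app (ev_le I) (p ++ [e]) q); auto. rewrite Hpq; auto. apply in_or_app; right; left; auto. }
    assert (Hnd' : NoDup (p ++ e :: q)) by (rewrite <- app_assoc in Hpq; simpl in Hpq; rewrite Hpq; auto).
    assert (Hep : ~ In e p). { intro. apply NoDup_remove_2 in Hnd'. apply Hnd'. apply in_or_app; auto. }
    assert (HeIn : In e es) by (rewrite <- Hpq; apply in_or_app; left; apply in_or_app; right; left; auto).
    assert (Hsplit : forall y, In y es -> In y p \/ y = e \/ In y q).
    { intros y Hy. rewrite <- Hpq in Hy. apply in_app_or in Hy. destruct Hy as [Hy|Hy]; auto.
      apply in_app_or in Hy. destruct Hy as [Hy|Hy]; auto. destruct Hy as [Hy|[]]; auto. }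
    rewrite map_app. rewrite run_snoc, Hrun. rewrite migrations_snoc. rewrite map_app. simpl map.
    rewrite Alg_snoc. rewrite stOf_snoc. fold s. rewrite filter_app, length_app.
    destruct e as [i|i].
    +
      pose proof (Hes _ HeIn) as HiL. simpl in HiL.
      assert (Hi : ~ In i (dom s)) by (intro H; apply Hep; apply (Hdom i H)).
      destruct (valid_nth I i HV HiL) as [Va [Vs Vd]].
      assert (Hpres : (S (length (dom s)) <= rho)%nat).
      { eapply Nat.le_trans; [|apply (Hrho (arr (itm I i)))]. unfold n_present.
        change (S (length (dom s))) with (length (i :: dom s)). apply NoDup_incl_length.
        constructor; auto. destruct HC; auto.
        intros j [Hj|Hj].
        - subst j. apply present_In. split; auto. lra.
        - apply present_In. destruct (Hdom j Hj) as [HA HD].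
          assert (HjL : (j < length I)%nat) by (destruct HC as [_ [A2 _]]; apply A2; auto).
          split; auto. split.
          + apply (ev_le_time I (Arr j) (Arr i)). apply Hord; simpl; auto.
          + destruct (Hsplit (Dep j) (HesD j HjL)) as [H|[H|H]]; [contradiction|discriminate|].
            destruct (Hord2 _ H) as [H'|[H' [H''|H'']]]; simpl in *; auto; discriminate. }
      assert (HcapB : INR (capf g (S (length (dom s)))) <= Bcf g rho).
      { destruct (capf_spec g (S (length (dom s))) Hg ltac:(lia)) as [_ C2]. eapply Rle_trans; [exact C2|].
        unfold Bcf. apply Rplus_le_compat_r. unfold Rdiv. apply Rmult_le_compat_r.
        left; apply Rinv_0_lt_compat. pose proof ln_lt_2; lra.
        apply ln_le_mono. apply Rmult_lt_0_compat. apply lt_0_INR; lia. apply Rinv_0_lt_compat; lra.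
        apply Rmult_le_compat_r. left; apply Rinv_0_lt_compat; lra. apply le_INR; auto. }
      assert (Hsz : 0 <= sizeI I i <= 1) by (unfold sizeI; lra).
      change (obs_of I (Arr i)) with (OArr i (sizeI I i)).
      unfold process. rewrite Alg_snoc. fold s. change (obs_of I (Arr i)) with (OArr i (sizeI I i)).
      unfold step. destruct (arrv g s i (sizeI I i)) as [s' b] eqn:Ea.
      destruct (arr_spec I g (Bcf g rho) s c i s' b Hg HC HM H6 H7 Hi HiL Hsz HcapB Ea) as
        [HC' [Hload [HM' [H6' [H7' [Ed' HP']]]]]].
      cbn [fst snd place moves].
      destruct (Rle_dec (load I c b + size (itm I i)) 1) as [_|Hn]; [|exfalso; apply Hn; exact Hload].
      exists (upd c i (Some b)). split; [reflexivity|].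
      split; auto. split; auto. split; auto. split; auto. split.
      * intros j Hj. rewrite Ed' in Hj. destruct Hj as [Hj|Hj].
        -- subst j. split. apply in_or_app; right; left; auto.
           intros HD. apply in_app_or in HD. destruct HD as [HD|[HD|[]]]; [|discriminate].
           pose proof (Hord _ _ HD (or_introl eq_refl)) as Hle. apply ev_le_time in Hle. simpl in Hle. lra.
        -- destruct (Hdom j Hj) as [HA HD]. split. apply in_or_app; auto.
           intros HD'. apply in_app_or in HD'. destruct HD' as [HD'|[HD'|[]]]; [contradiction|discriminate].
      * rewrite HP'. simpl length. rewrite Nat.add_0_r, Nat.add_0_r. exact Hpot.
    + change (obs_of I (Dep i)) with (ODep i).
      unfold process. rewrite Alg_snoc. fold s. change (obs_of I (Dep i)) with (ODep i).
      unfold step. destruct (dep g s i) as [s' ms] eqn:Ed.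
      destruct (dep_spec I g (Bcf g rho) s c i s' ms Hg HC HM H6 H7 Ed) as
        [HC' [[c' [Ha' HM']] [H6' [H7' [Hdom' Hp']]]]].
      cbn [fst snd place moves].
      exists c'. split; [exact Ha'|].
      split; auto. split; auto. split; auto. split; auto. split.
      * intros j Hj. apply Hdom' in Hj. destruct Hj as [Hj Hji]. destruct (Hdom j Hj) as [HA HD].
        split. apply in_or_app; auto.
        intros HD'. apply in_app_or in HD'. destruct HD' as [HD'|[HD'|[]]]; [contradiction|].
        injection HD'; intros; subst; contradiction.
      * rewrite !plus_INR. simpl length. simpl INR. lra.
Qed.

Lemma length_filter_split {A} (f : A -> bool) l :
  length l = (length (filter f l) + length (filter (fun x => negb (f x)) l))%nat.
Proof. induction l; simpl; auto. destruct (f a); simpl; lia. Qed.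

Lemma NoDup_map_inj_on (f : nat -> nat) l : NoDup l ->
  (forall x y, In x l -> In y l -> f x = f y -> x = y) -> NoDup (map f l).
Proof.
  induction 1 as [|a l Hna Hnd IH]; intros Hinj; simpl; constructor.
  - intros Hin. apply in_map_iff in Hin. destruct Hin as [y [E Hy]].
    assert (y = a) by (apply Hinj; simpl; auto). subst; contradiction.
  - apply IH. intros; apply Hinj; simpl; auto.
Qed.

Lemma INR_length_sum l : INR (length l) = sumR l (fun _ => 1).
Proof. induction l; simpl length; auto. rewrite S_INR, sumR_cons, IHl. lra. Qed.

Lemma bins_bound I g Bc s c N : 0 < g < 1 -> CoreS I g Bc s -> Match s c -> S6 s -> S7 g s ->
  (forall i, In i (dom s) -> (cls s i < N)%nat) -> (forall i, In i (dom s) -> 0 <= sizeI I i) ->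
  INR (open_bins I c) <= 2 * INR N + (2 / g) * sumR (dom s) (sizeI I).
Proof.
  intros Hg HC [Mi Mo] H6 H7 HN Hsz.
  pose proof HC as [H1 [H2 [H3 [H4 H5]]]].
  unfold open_bins.
  set (Lb := nodup Nat.eq_dec (flat_map (fun i => match c i with Some b => [b] | None => [] end) (seq 0 (length I)))).
  assert (HLnd : NoDup Lb) by apply NoDup_nodup.
  assert (HLb : forall b, In b Lb -> exists i, In i (dom s) /\ cfg s i = b).
  { intros b Hb. apply nodup_In in Hb. apply in_flat_map in Hb. destruct Hb as [i [_ Hb]].
    destruct (in_dec Nat.eq_dec i (dom s)) as [Hi|Hi].
    - rewrite (Mi i Hi) in Hb. destruct Hb as [Hb|[]]. exists i; auto.
    - rewrite (Mo i Hi) in Hb. contradiction. }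
  rewrite (length_filter_split (sld s) Lb), plus_INR.
  set (Ls := filter (sld s) Lb). set (Lu := filter (fun x => negb (sld s x)) Lb).
  assert (Hu : (length Lu <= N)%nat).
  { rewrite <- (length_map (bk s)). rewrite <- (length_seq N 0). apply NoDup_incl_length.
    - apply NoDup_map_inj_on. apply NoDup_filter; auto.
      intros x y Hx Hy E. unfold Lu in Hx, Hy. apply filter_In in Hx, Hy.
      destruct Hx as [Hx Hsx]. destruct Hy as [Hy Hsy].
      destruct (HLb x Hx) as [i [Hi Ei]]. destruct (HLb y Hy) as [j [Hj Ej]].
      destruct (H6 i Hi) as [A|A]; [rewrite Ei in A; rewrite A in Hsx; discriminate|].
      destruct (H6 j Hj) as [B|B]; [rewrite Ej in B; rewrite B in Hsy; discriminate|].
      rewrite Ei in A. rewrite Ej in B. rewrite E in A. congruence.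
    - intros k Hk. apply in_map_iff in Hk. destruct Hk as [x [E Hx]]. subst k.
      unfold Lu in Hx. apply filter_In in Hx. destruct Hx as [Hx _].
      destruct (HLb x Hx) as [i [Hi Ei]]. apply in_seq. destruct (H2 i Hi) as [_ [_ [Hbk _]]].
      rewrite <- Ei, Hbk. specialize (HN i Hi). lia. }
  set (w := fun k => / (g * INR (2 ^ k))).
  assert (Hw : forall k, 0 < w k).
  { intros k. unfold w. apply Rinv_0_lt_compat. apply Rmult_lt_0_compat. lra. apply INR_pow2_pos. }
  assert (Hs : INR (length Ls) <= sumR (dom s) (fun i => w (cls s i))).
  { rewrite INR_length_sum.
    apply Rle_trans with (sumR Ls (fun b => sumR (dom s) (fun i => if Nat.eqb (cfg s i) b then w (cls s i) else 0))).
    - apply sumR_le. intros b Hb. unfold Ls in Hb. apply filter_In in Hb. destruct Hb as [Hb Hsb].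
      destruct (H7 b Hsb) as [Hc _].
      rewrite <- (sumR_filter (fun i => Nat.eqb (cfg s i) b)).
      rewrite (sumR_ext _ _ (fun _ => w (bk s b))).
      + rewrite <- (Rmult_1_r (w (bk s b))). rewrite sumR_scale. rewrite <- INR_length_sum.
        fold (cnt s b). unfold w.
        apply Rmult_le_reg_l with (g * INR (2 ^ bk s b)). apply Rmult_lt_0_compat; [lra|apply INR_pow2_pos].
        rewrite <- Rmult_assoc, Rinv_r, Rmult_1_l. lra.
        apply Rgt_not_eq. apply Rmult_lt_0_compat; [lra|apply INR_pow2_pos].
      + intros i Hi. apply filter_In in Hi. destruct Hi as [Hi E]. apply Nat.eqb_eq in E.
        destruct (H2 i Hi) as [_ [_ [Hbk _]]]. rewrite <- E, Hbk. reflexivity.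
    - rewrite sumR_exchange. apply sumR_le. intros i Hi.
      transitivity (sumR Ls (fun b => if Nat.eqb (cfg s i) b then w (cls s i) else 0)); [right; reflexivity|].
      rewrite sumR_indicator. destruct (in_dec _ _ _); [lra|]. left; apply Hw.
      apply NoDup_filter; auto. }
  assert (Hsplit : sumR (dom s) (fun i => w (cls s i)) <=
     sumR (dom s) (fun i => if capped I s i then w (cls s i) else 0) + (2 / g) * sumR (dom s) (sizeI I)).
  { rewrite <- sumR_scale, <- sumR_plus. apply sumR_le. intros i Hi.
    pose proof (Hsz i Hi). assert (0 <= 2 / g) by (unfold Rdiv; apply Rmult_le_pos; [lra|left; apply Rinv_0_lt_compat; lra]).
    unfold capped. destruct (Rle_dec _ _) as [Hc|Hc].
    - assert (0 <= 2 / g * sizeI I i) by (apply Rmult_le_pos; auto). lra.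
    - apply Rnot_le_lt in Hc. unfold w. rewrite Rplus_0_l.
      replace (2 ^ S (cls s i))%nat with (2 * 2 ^ cls s i)%nat in Hc by (simpl; lia).
      rewrite mult_INR in Hc. simpl INR in Hc.
      pose proof (INR_pow2_pos (cls s i)).
      rewrite Rinv_mult in Hc. rewrite Rinv_mult.
      apply Rmult_le_reg_l with (g / 2). unfold Rdiv; apply Rmult_lt_0_compat; lra.
      replace (g / 2 * (2 / g * sizeI I i)) with (sizeI I i) by (field; lra).
      replace (g / 2 * (/ g * / INR (2 ^ cls s i))) with (/ (1 + 1) * / INR (2 ^ cls s i)) by (field; lra).
      lra. }
  assert (Hcap : sumR (dom s) (fun i => if capped I s i then w (cls s i) else 0) <= INR N).
  { rewrite (sumR_partition (dom s) (cls s) N) by auto.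
    replace (INR N) with (sumR (seq 0 N) (fun _ => 1)) by (rewrite <- INR_length_sum, length_seq; reflexivity).
    apply sumR_le. intros k Hk.
    rewrite sumR_filter.
    rewrite (sumR_ext _ _ (fun i => w k * (if andb (Nat.eqb (cls s i) k) (capped I s i) then 1 else 0))).
    - rewrite sumR_scale, <- INR_length_filter. fold (capcount I s (dom s) k).
      specialize (H5 k). unfold w. apply Rmult_le_reg_l with (g * INR (2 ^ k)).
      apply Rmult_lt_0_compat; [lra|apply INR_pow2_pos].
      rewrite <- Rmult_assoc, Rinv_r, Rmult_1_l, Rmult_1_r. exact H5.
      apply Rgt_not_eq. apply Rmult_lt_0_compat; [lra|apply INR_pow2_pos].
    - intros i _. destruct (Nat.eqb_spec (cls s i) k); simpl.
      + subst. destruct (capped I s i); lra.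
      + lra. }
  assert (INR (length Lu) <= INR N) by (apply le_INR; auto).
  lra.
Qed.

Lemma ln_le_sub1 y : 0 < y -> ln y <= y - 1.
Proof. intros Hy. pose proof (exp_ineq1_le (ln y)). rewrite exp_ln in H by auto. lra. Qed.

Lemma ln_INR_nonneg n : 0 <= ln (INR n).
Proof.
  destruct n. simpl INR. unfold ln. destruct (Rlt_dec 0 0) as [r|r]; [exfalso; exact (Rlt_irrefl 0 r)|right; reflexivity].
  rewrite <- ln_1. apply ln_le_mono. lra. rewrite S_INR. pose proof (pos_INR n). lra.
Qed.

Lemma final_ineq alpha rho opt V : 0 < alpha < 1/2 -> 1 <= INR rho -> 1 <= opt -> 0 <= V <= opt ->
  2 * (Bcf (4 * alpha / (1 + 2 * alpha)) rho + 1) + (2 / (4 * alpha / (1 + 2 * alpha))) * V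
    <= opt / alpha + 9 * (1 + ln (INR rho)).
Proof.
  intros Ha Hr Ho HV. set (g := 4 * alpha / (1 + 2 * alpha)).
  assert (Hg : 0 < g) by (unfold g; apply Rdiv_lt_0_compat; lra).
  set (x := / (2 * alpha)). set (z := (1 + 2 * alpha) / (4 * alpha)).
  assert (Hx : 1 < x). { unfold x. replace 1 with (/ 1) by (apply Rinv_1). apply Rinv_lt_contravar; lra. }
  assert (Hz : 0 < z) by (unfold z; apply Rdiv_lt_0_compat; lra).
  assert (Hzx : z <= x). { unfold z, x. apply Rmult_le_reg_r with (4 * alpha). lra.
    unfold Rdiv. rewrite Rmult_assoc, Rinv_l by lra. replace (4 * alpha) with (2 * (2 * alpha)) by ring.
    rewrite <- Rmult_assoc, (Rmult_comm (/ (2 * alpha))), Rmult_assoc, Rinv_l by lra. lra. }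
  assert (Hzg : / g = z) by (unfold g, z; field; lra).
  assert (H2g : 2 / g = x + 1) by (unfold g, x; field; lra).
  assert (Hoa : opt / alpha = 2 * x * opt) by (unfold x; field; lra).
  pose proof ln_lt_2 as L2a. assert (L2b : ln 2 <= 1) by (pose proof (ln_le_sub1 2); lra).
  set (a := ln (INR rho)). assert (Ha0 : 0 <= a) by (unfold a; apply ln_INR_nonneg).
  assert (Hlnz : ln z <= 2 * ln 2 + z / 4 - 1).
  { replace z with (4 * (z / 4)) at 1 by field. rewrite ln_mult by lra.
    replace 4 with (2 * 2) at 1 by ring. rewrite ln_mult by lra. pose proof (ln_le_sub1 (z / 4)). lra. }
  assert (Hln : ln (INR rho / g) = a + ln z).
  { unfold Rdiv. rewrite ln_mult. rewrite Hzg. reflexivity. lra. apply Rinv_0_lt_compat; lra. }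
  assert (Ha2 : a / ln 2 <= 2 * a).
  { apply Rmult_le_reg_r with (ln 2). lra. unfold Rdiv. rewrite Rmult_assoc, Rinv_l by lra. nra. }
  assert (Hz2 : ln z / ln 2 <= 2 + z / 2).
  { apply Rmult_le_reg_r with (ln 2). lra. unfold Rdiv. rewrite Rmult_assoc, Rinv_l by lra. nra. }
  unfold Bcf. fold g. rewrite Hln, H2g, Hoa. fold a.
  replace ((a + ln z) / ln 2) with (a / ln 2 + ln z / ln 2) by (field; lra).
  assert ((x + 1) * V <= (x + 1) * opt) by (apply Rmult_le_compat_l; lra).
  assert ((x - 1) * 1 <= (x - 1) * opt) by (apply Rmult_le_compat_l; lra).
  lra.
Qed.

Lemma packable_sum I t m : packable I t m -> sumR (present_items I t) (sizeI I) <= INR m.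
Proof.
  intros [f [Hf Hb]]. rewrite (sumR_partition _ f m) by auto.
  replace (INR m) with (sumR (seq 0 m) (fun _ => 1)) by (rewrite <- INR_length_sum, length_seq; reflexivity).
  apply sumR_le. intros b Hb'. apply in_seq in Hb'. specialize (Hb b ltac:(lia)).
  rewrite sumR_map in Hb. exact Hb.
Qed.

Lemma prefix_time I es t : StronglySorted (ev_le I) es ->
  (forall e, In e (firstn (n_events_upto I es t) es) -> ev_time I e <= t) /\
  (forall e, In e (skipn (n_events_upto I es t) es) -> t < ev_time I e).
Proof.
  induction 1 as [|a l Hs IH Hf]. simpl. split; intros; contradiction.
  unfold n_events_upto in *. cbn [filter]. destruct (Rle_dec (ev_time I a) t) as [Ht|Ht].
  - cbn [length firstn skipn]. destruct IH as [A B]. split.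
    + intros e [He|He]; [subst; auto|auto].
    + auto.
  - assert (Hz : length (filter (fun e => if Rle_dec (ev_time I e) t then true else false) l) = O).
    { apply length_zero_iff_nil. rewrite Forall_forall in Hf.
      rewrite (filter_ext_in _ (fun _ => false)). apply filter_false.
      intros e He. destruct (Rle_dec (ev_time I e) t); auto. exfalso. pose proof (ev_le_time I a e (Hf e He)). lra. }
    rewrite Hz. cbn [firstn skipn]. split. intros; contradiction.
    intros e [He|He]. subst. lra. rewrite Forall_forall in Hf. apply Hf in He. apply ev_le_time in He. lra.
Qed.

Theorem theorem2 :
  exists C : R,
  forall alpha : R, 0 < alpha < 1/2 ->
  exists A : algorithm,
  forall (I : instance), Forall valid_item I ->
  forall es : list event, valid_order I es ->
    run I A es <> None /\
    INR (migrations I A es) <= (4 * alpha / (1 - 2 * alpha)) * INR (length I) /\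
    (forall (rho : nat), is_rho I rho ->
     forall (t : R) (opt : nat), is_opt I t opt ->
     forall c : config, run I A (firstn (n_events_upto I es t) es) = Some c ->
       INR (open_bins I c) <= INR opt / alpha + C * (1 + ln (INR rho))).
Proof.
  exists 9. intros alpha Ha. set (g := 4 * alpha / (1 + 2 * alpha)).
  assert (Hg : 0 < g < 1).
  { unfold g. split. apply Rdiv_lt_0_compat; lra. apply Rmult_lt_reg_r with (1 + 2 * alpha). lra.
    unfold Rdiv. rewrite Rmult_assoc, Rinv_l by lra. lra. }
  assert (Hr : g / (1 - g) = 4 * alpha / (1 - 2 * alpha)) by (unfold g; field; lra).
  exists (Alg g). intros I HV es Hvo.
  assert (HnL : forall t, (n_present I t <= length I)%nat).
  { intros t. unfold n_present, present_items. rewrite <- (length_seq (length I) 0) at 2. apply filter_length_le. }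
  destruct (main_inv I g (length I) es Hg HV Hvo HnL es [] (app_nil_r es)) as
    [c [Hrun [_ [_ [_ [_ [_ Hpot]]]]]]].
  split; [congruence|]. split.
  - destruct Hvo as [Hperm _]. rewrite (count_deps I es Hperm) in Hpot. rewrite <- Hr.
    assert (0 <= Phi (stOf g (map (obs_of I) es))) by (apply sumR_nonneg; intros; apply pos_INR).
    assert (0 <= g / (1 - g)) by (left; apply Rdiv_lt_0_compat; lra).
    assert (0 <= g / (1 - g) * Phi (stOf g (map (obs_of I) es))) by (apply Rmult_le_pos; auto). lra.
  - intros rho [_ Hrho] t opt [Hopt _] c' Hrun'.
    set (n := n_events_upto I es t) in *.
    destruct (main_inv I g rho es Hg HV Hvo Hrho (firstn n es) (skipn n es) (firstn_skipn n es)) as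
      [c0 [Hrun0 [HC [HM [H6 [H7 [Hdom _]]]]]]].
    rewrite Hrun0 in Hrun'. injection Hrun'; intros <-. clear Hrun'.
    set (s := stOf g (map (obs_of I) (firstn n es))) in *.
    destruct Hvo as [Hperm Hsort].
    destruct (prefix_time I es t Hsort) as [Tp Tq]. fold n in Tp, Tq.
    pose proof HC as [H1 [H2 [H3 [H4 H5]]]].
    assert (Hpres : incl (dom s) (present_items I t)).
    { intros j Hj. destruct (Hdom j Hj) as [HA HD]. destruct (H2 j Hj) as [HjL _].
      apply present_In. split; auto. split.
      - apply (Tp (Arr j) HA).
      - assert (HDes : In (Dep j) es) by (apply Permutation_in with (all_events I); [apply Permutation_sym; auto|apply all_events_In; auto]).
        rewrite <- (firstn_skipn n es) in HDes. apply in_app_or in HDes. destruct HDes as [X|X]; [contradiction|].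
        apply (Tq _ X). }
    assert (Hszd : forall i, In i (dom s) -> 0 <= sizeI I i).
    { intros i Hi. destruct (H2 i Hi) as [HiL _]. destruct (valid_nth I i HV HiL) as [_ [Hs _]]. unfold sizeI; lra. }
    assert (HV' : sumR (dom s) (sizeI I) <= INR opt).
    { eapply Rle_trans; [|apply packable_sum; exact Hopt]. apply sumR_incl_le; auto.
      intros i Hi. apply present_In in Hi. destruct Hi as [HiL _]. destruct (valid_nth I i HV HiL) as [_ [Hs _]]. unfold sizeI; lra. }
    assert (Hrhs : 0 <= INR opt / alpha + 9 * (1 + ln (INR rho))).
    { pose proof (ln_INR_nonneg rho). assert (0 <= INR opt / alpha) by (unfold Rdiv; apply Rmult_le_pos; [apply pos_INR|left; apply Rinv_0_lt_compat; lra]). lra. }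
    case_eq (dom s); [intros Edom|intros j0 d Edom].
    + assert (Hb := bins_bound I g (Bcf g rho) s c0 0 Hg HC HM H6 H7).
      rewrite Edom in Hb. assert (INR (open_bins I c0) <= 2 * INR 0 + 2 / g * sumR [] (sizeI I)).
      { apply Hb; intros; contradiction. } rewrite sumR_nil in H. simpl INR in H. lra.
    + assert (Hj0 : In j0 (dom s)) by (rewrite Edom; left; auto).
      assert (Hrho1 : (1 <= rho)%nat).
      { eapply Nat.le_trans; [|apply (Hrho t)]. unfold n_present.
        pose proof (Hpres j0 Hj0) as HP0. destruct (present_items I t). contradiction. simpl; lia. }
      assert (Hopt1 : (1 <= opt)%nat).
      { destruct Hopt as [f [Hf _]]. specialize (Hf j0 (Hpres j0 Hj0)). lia. }
      set (B := Bcf g rho).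
      assert (HB0 : 0 <= B).
      { destruct (H2 j0 Hj0) as [_ [_ [_ [_ Hc]]]]. pose proof (pos_INR (cls s j0)). fold B in Hc. lra. }
      destruct (archimed B) as [A1 A2].
      assert (Hup : (0 <= up B)%Z) by (apply le_IZR; lra).
      set (N := Z.to_nat (up B)).
      assert (HN : INR N = IZR (up B)) by (unfold N; rewrite INR_IZR_INZ, Z2Nat.id; auto).
      assert (HclsN : forall i, In i (dom s) -> (cls s i < N)%nat).
      { intros i Hi. destruct (H2 i Hi) as [_ [_ [_ [_ Hc]]]]. apply INR_lt. rewrite HN. fold B in Hc. lra. }
      pose proof (bins_bound I g (Bcf g rho) s c0 N Hg HC HM H6 H7 HclsN Hszd) as Hb.
      assert (HN2 : INR N <= B + 1) by lra.
      pose proof (final_ineq alpha rho (INR opt) (sumR (dom s) (sizeI I)) Ha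
        ltac:(replace 1 with (INR 1) by reflexivity; apply le_INR; auto)
        ltac:(replace 1 with (INR 1) by reflexivity; apply le_INR; auto)
        ltac:(split; [apply sumR_nonneg; auto|auto])) as Hf.
      fold g in Hf. fold B in Hf.
      assert (0 <= 2 / g) by (left; apply Rdiv_lt_0_compat; lra).
      lra.
Qed.
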